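(* Let $\alpha\in[1,2]$, $\varepsilon\in\mathbb{R}$, $T>0$, and let $U^n_\varepsilon\in V_N$ be the approximate solution at the $n$-th step of the fully discrete scheme \[ (U^{n+1}_\varepsilon,\phi)=(U^n_\varepsilon,\phi)-6\Delta t\left(U^{n+\frac12}_\varepsilon(U^{n+\frac12}_\varepsilon)_x,\phi\right)+\varepsilon^2\Delta t\left(\mathcal{D}^\alpha(U^{n+\frac12}_\varepsilon)_x,\phi\right)\ \ \forall\phi\in V_N,\qquad U^{n+\frac12}_\varepsilon=\tfrac{U^n_\varepsilon+U^{n+1}_\varepsilon}{2}. \] Suppose $(n+1)\Delta t\le T$, and let $\{v^\ell\}_{\ell\ge0}\subset V_N$ be defined by $v^0=U^n_\varepsilon$ and, for $\ell\ge0$, \[ (v^{\ell+1},\phi)=(U^n_\varepsilon,\phi)-\Delta t\left(\mathcal{B}\Big(\tfrac{U^n_\varepsilon+v^\ell}{2}\Big),\phi\right)+\tfrac12\varepsilon^2\Delta t\left(\mathcal{D}^\alpha(U^n_\varepsilon+v^{\ell+1})_x,\phi\right)\quad\forall\phi\in V_N, \] where $\mathcal{B}(v)=6vv_x$. Assume that $\Delta t$ satisfies \[ 6N\Delta t\le\frac{\zeta}{\eta\|U^n_\varepsilon\|_{1+\alpha}}, \] where $\zeta\in(0,1)$ and $\eta=\frac{8-\zeta}{1-\zeta}>8$. Then the sequence $\{v^\ell\}_{\ell\ge0}$ converges, $\lim_{\ell\to\infty}v^\ell=U^{n+1}_\varepsilon$, and \[ \|U^{n+1}_\varepsilon\|_{1+\alpha}\le\eta\|U^n_\varepsilon\|_{1+\alpha}.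 \]
   Context: $I=[-\pi,\pi]$; functions are $2\pi$-periodic. $(u,v)=\int_I u\bar v\,dx$. For $f\in L^2(I)$, $\hat f(k)=\frac{1}{2\pi}\int_I f(x)e^{-ikx}dx$. For $r\ge0$, $\|f\|_r=\left(\sum_{k\in\mathbb{Z}}(1+|k|^2)^r|\hat f(k)|^2\right)^{1/2}$. $V_N$ is the space of real-valued trigonometric polynomials spanned by $\{e^{ikx}:-N\le k\le N\}$, and $\mathcal{D}^\alpha f=\sum_{k}|k|^\alpha\hat f(k)e^{ikx}$. *)

(* Defs.v *)
From Stdlib Require Import Reals ZArith.
From Coquelicot Require Import Coquelicot.
Open Scope R_scope.

(* V_N: real-valued trigonometric polynomials of degree <= N, i.e. the real
   span of {e^{ikx} : |k| <= N} restricted to real-valued functions,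
   which is the real span of cos(kx), sin(kx), 0 <= k <= N. *)
Definition inVN (N : nat) (f : R -> R) : Prop :=
  exists a b : nat -> R, forall x : R,
    f x = sum_f_R0 (fun k => a k * cos (INR k * x) + b k * sin (INR k * x)) N.

Definition inner (u v : R -> R) : R := RInt (fun x => u x * v x) (- PI) PI.

Definition hatRe (f : R -> R) (k : Z) : R :=
  / (2 * PI) * RInt (fun x => f x * cos (IZR k * x)) (- PI) PI.
Definition hatIm (f : R -> R) (k : Z) : R :=
  - (/ (2 * PI) * RInt (fun x => f x * sin (IZR k * x)) (- PI) PI).
Definition hatsq (f : R -> R) (k : Z) : R := hatRe f k ^ 2 + hatIm f k ^ 2.

(* ||f||_r = ( sum_{k in Z} (1+|k|^2)^r |\hat f(k)|^2 )^{1/2};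
   the k and -k terms (all nonnegative) are grouped. *)
Definition hnorm (r : R) (f : R -> R) : R :=
  sqrt (hatsq f 0%Z +
        Series (fun n => Rpower (1 + (INR (S n)) ^ 2) r *
                   (hatsq f (Z.of_nat (S n)) + hatsq f (- Z.of_nat (S n))%Z))).

(* D^alpha f = sum_k |k|^alpha \hat f(k) e^{ikx}; for real f the k, -k terms
   combine to 2 Re(\hat f(k) e^{ikx}); the k = 0 term vanishes (alpha > 0). *)
Definition Dalpha (alpha : R) (f : R -> R) : R -> R := fun x =>
  Series (fun n => Rpower (INR (S n)) alpha *
     (2 * (hatRe f (Z.of_nat (S n)) * cos (INR (S n) * x)
           - hatIm f (Z.of_nat (S n)) * sin (INR (S n) * x)))).

Definition dx (f : R -> R) : R -> R := fun x => Derive f x.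

Definition Bop (v : R -> R) : R -> R := fun x => 6 * v x * dx v x.

Definition scheme_step (N : nat) (alpha eps dt : R) (U0 U1 : R -> R) : Prop :=
  let Uh := fun x => (U0 x + U1 x) / 2 in
  forall phi, inVN N phi ->
    inner U1 phi = inner U0 phi
                   - 6 * dt * inner (fun x => Uh x * dx Uh x) phi
                   + eps ^ 2 * dt * inner (Dalpha alpha (dx Uh)) phi.

Definition iter_step (N : nat) (alpha eps dt : R) (U0 vl vl1 : R -> R) : Prop :=
  forall phi, inVN N phi ->
    inner vl1 phi = inner U0 phi
                    - dt * inner (Bop (fun x => (U0 x + vl x) / 2)) phi
                    + / 2 * eps ^ 2 * dt
                        * inner (Dalpha alpha (dx (fun x => U0 x + vl1 x))) phi.

(* Main.v *)
Require Import Defs.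
From Stdlib Require Import Reals ZArith Lra Lia Psatz.
From Coquelicot Require Import Coquelicot.
Open Scope R_scope.


Ltac rr := match goal with |- @eq _ ?a ?b => change (@eq R a b) end.
Ltac sp := repeat match goal with
  | |- context [Coquelicot.Complex.Re (?a, ?b)] => change (Coquelicot.Complex.Re (a, b)) with a
  | |- context [Coquelicot.Complex.Im (?a, ?b)] => change (Coquelicot.Complex.Im (a, b)) with b end.

Fixpoint sm (n : nat) (f : nat -> R) : R :=
  match n with O => 0 | S n => sm n f + f n end.

Lemma sm_ext n f g : (forall i, (i < n)%nat -> f i = g i) -> sm n f = sm n g.
Proof. induction n; simpl; intros H; auto. rewrite IHn by (intros; apply H; lia). rewrite H by lia. auto. Qed.

Lemma sm_plus n f g : sm n (fun i => f i + g i) = sm n f + sm n g.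
Proof. induction n; simpl; [lra|]. rewrite IHn; lra. Qed.

Lemma sm_scal n c f : sm n (fun i => c * f i) = c * sm n f.
Proof. induction n; simpl; [lra|]. rewrite IHn; lra. Qed.

Lemma sm_zero n : sm n (fun _ => 0) = 0.
Proof. induction n; simpl; [lra|]. rewrite IHn; lra. Qed.

Lemma sm_le n f g : (forall i, (i < n)%nat -> f i <= g i) -> sm n f <= sm n g.
Proof. induction n; simpl; intros H; [lra|]. specialize (IHn (fun i Hi => H i ltac:(lia))). specialize (H n ltac:(lia)). lra. Qed.

Lemma sm_exch n m (f : nat -> nat -> R) :
  sm n (fun i => sm m (f i)) = sm m (fun j => sm n (fun i => f i j)).
Proof.
  induction n; simpl. { rewrite sm_zero; auto. }
  rewrite IHn, <- sm_plus. auto.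
Qed.

Lemma sm_ind n p (g : nat -> R) :
  sm n (fun i => if Nat.eq_dec i p then g i else 0) = if lt_dec p n then g p else 0.
Proof.
  induction n; simpl.
  - destruct (lt_dec p 0); [lia|auto].
  - rewrite IHn. destruct (Nat.eq_dec n p), (lt_dec p n), (lt_dec p (S n)); subst; try lia; lra.
Qed.

Lemma sm_lim n (F : nat -> nat -> R) (G : nat -> R) :
  (forall i, (i < n)%nat -> is_lim_seq (fun l => F l i) (G i)) ->
  is_lim_seq (fun l => sm n (F l)) (sm n G).
Proof.
  induction n; simpl; intros H.
  - apply is_lim_seq_const.
  - apply (is_lim_seq_plus' _ _ (sm n G) (G n)).
    + apply IHn. intros; apply H; lia.
    + apply H; lia.
Qed.

Definition zs (N : nat) (G : Z -> R) : R :=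
  G 0%Z + sm N (fun i => G (Z.of_nat (S i)) + G (- Z.of_nat (S i))%Z).

Lemma zs_ext N F G : (forall j, (Z.abs j <= Z.of_nat N)%Z -> F j = G j) -> zs N F = zs N G.
Proof.
  intros H. unfold zs. rewrite H by lia. f_equal. apply sm_ext. intros i Hi.
  rewrite !H by lia. auto.
Qed.

Lemma zs_plus N F G : zs N (fun j => F j + G j) = zs N F + zs N G.
Proof.
  unfold zs. rewrite <- Rplus_assoc.
  replace (sm N (fun i => F (Z.of_nat (S i)) + G (Z.of_nat (S i)) + (F (- Z.of_nat (S i))%Z + G (- Z.of_nat (S i))%Z)))
    with (sm N (fun i => (F (Z.of_nat (S i)) + F (- Z.of_nat (S i))%Z) + (G (Z.of_nat (S i)) + G (- Z.of_nat (S i))%Z))).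
  2:{ apply sm_ext; intros; lra. }
  rewrite sm_plus. lra.
Qed.

Lemma zs_scal N c F : zs N (fun j => c * F j) = c * zs N F.
Proof.
  unfold zs.
  replace (sm N (fun i => c * F (Z.of_nat (S i)) + c * F (- Z.of_nat (S i))%Z))
    with (sm N (fun i => c * (F (Z.of_nat (S i)) + F (- Z.of_nat (S i))%Z))).
  2:{ apply sm_ext; intros; lra. }
  rewrite sm_scal. lra.
Qed.

Lemma zs_zero N : zs N (fun _ => 0) = 0.
Proof. unfold zs. replace (sm N (fun _ => 0 + 0)) with (sm N (fun _ => 0)) by (apply sm_ext; intros; lra).
  rewrite sm_zero; lra. Qed.

Lemma zs_opp N F : zs N (fun j => - F j) = - zs N F.
Proof. replace (- zs N F) with ((-1) * zs N F) by ring. rewrite <- zs_scal.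
  apply zs_ext; intros; ring. Qed.

Lemma zs_minus N F G : zs N (fun j => F j - G j) = zs N F - zs N G.
Proof. unfold Rminus. rewrite <- zs_opp, <- zs_plus. auto. Qed.

Lemma zs_le N F G : (forall j, (Z.abs j <= Z.of_nat N)%Z -> F j <= G j) -> zs N F <= zs N G.
Proof.
  intros H. unfold zs. apply Rplus_le_compat. apply H; lia.
  apply sm_le. intros i Hi. apply Rplus_le_compat; apply H; lia.
Qed.

Lemma zs_nonneg N F : (forall j, (Z.abs j <= Z.of_nat N)%Z -> 0 <= F j) -> 0 <= zs N F.
Proof. intros H. rewrite <- (zs_zero N). apply zs_le. auto. Qed.

Lemma zs_neg N F : zs N (fun j => F (- j)%Z) = zs N F.
Proof.
  unfold zs. f_equal. apply sm_ext. intros. rewrite Z.opp_involutive. lra.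
Qed.

Lemma sm_zs_exch N M (G : nat -> Z -> R) :
  sm N (fun i => zs M (G i)) = zs M (fun k => sm N (fun i => G i k)).
Proof.
  induction N; simpl.
  - rewrite zs_zero; auto.
  - rewrite IHN, <- zs_plus. auto.
Qed.

Lemma zs_exch N M (F : Z -> Z -> R) :
  zs N (fun j => zs M (F j)) = zs M (fun k => zs N (fun j => F j k)).
Proof.
  unfold zs at 1.
  replace (sm N (fun i => zs M (F (Z.of_nat (S i))) + zs M (F (- Z.of_nat (S i))%Z)))
    with (sm N (fun i => zs M (fun k => F (Z.of_nat (S i)) k + F (- Z.of_nat (S i))%Z k)))
    by (apply sm_ext; intros; rewrite zs_plus; auto).
  rewrite sm_zs_exch, <- zs_plus. reflexivity.
Qed.

Lemma zs_ind N k (g : Z -> R) :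
  zs N (fun j => if Z.eq_dec j k then g j else 0) =
  if Z_le_dec (Z.abs k) (Z.of_nat N) then g k else 0.
Proof.
  unfold zs.
  destruct (Z.eq_dec 0 k) as [E|E].
  - subst k. rewrite (sm_ext _ _ (fun _ => 0)). 2:{ intros i Hi. destruct Z.eq_dec; [lia|]. destruct Z.eq_dec; [lia|]. lra. }
    rewrite sm_zero. destruct Z_le_dec; [|lia]. lra.
  - destruct (Z_lt_le_dec 0 k) as [Hk|Hk].
    + destruct (Z_of_nat_complete_inf k) as [q Hq]; [lia|]. destruct q as [|p]; [lia|].
      rewrite (sm_ext _ _ (fun i => if Nat.eq_dec i p then g (Z.of_nat (S i)) else 0)).
      2:{ intros i Hi. destruct (Z.eq_dec (- Z.of_nat (S i)) k); [lia|].
          destruct (Z.eq_dec (Z.of_nat (S i)) k), (Nat.eq_dec i p); try lia; lra. }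
      rewrite sm_ind. destruct (lt_dec p N), Z_le_dec; try lia; subst; lra.
    + destruct (Z_of_nat_complete_inf (- k)) as [q Hq]; [lia|]. destruct q as [|p]; [lia|].
      rewrite (sm_ext _ _ (fun i => if Nat.eq_dec i p then g (- Z.of_nat (S i))%Z else 0)).
      2:{ intros i Hi. destruct (Z.eq_dec (Z.of_nat (S i)) k); [lia|].
          destruct (Z.eq_dec (- Z.of_nat (S i)) k), (Nat.eq_dec i p); try lia; lra. }
      rewrite sm_ind. destruct (lt_dec p N), Z_le_dec; try lia.
      * subst. replace k with (- Z.of_nat (S p))%Z by lia. lra.
      * lra.
Qed.

Lemma zs_ind_le N k (g : Z -> R) : 0 <= g k ->
  zs N (fun j => if Z.eq_dec j k then g j else 0) <= g k.
Proof. intros H. rewrite zs_ind. destruct Z_le_dec; lra. Qed.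

Lemma zs_lim N (F : nat -> Z -> R) (G : Z -> R) :
  (forall j, is_lim_seq (fun l => F l j) (G j)) ->
  is_lim_seq (fun l => zs N (F l)) (zs N G).
Proof.
  intros H. unfold zs. apply is_lim_seq_plus'. apply H.
  apply sm_lim. intros. apply is_lim_seq_plus'; apply H.
Qed.

Lemma discr A B C : 0 <= A -> (forall t, 0 <= A * t * t - 2 * B * t + C) -> B * B <= A * C.
Proof.
  intros HA H. destruct (Rle_lt_or_eq_dec 0 A HA) as [HA'|HA'].
  - specialize (H (B / A)). 
    assert (E : A * (B / A) * (B / A) - 2 * B * (B / A) + C = C - B * B / A) by (field; lra).
    rewrite E in H. apply Rmult_le_reg_r with (/ A). apply Rinv_0_lt_compat; auto.
    replace (A * C * / A) with C by (field; lra). unfold Rdiv in H. lra.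
  - subst A. destruct (Req_dec B 0) as [HB|HB]. subst; nra.
    specialize (H ((C + 1) / (2 * B))). replace (0 * ((C + 1) / (2 * B)) * ((C + 1) / (2 * B)) - 2 * B * ((C + 1) / (2 * B)) + C) with (-1) in H by (field; auto). lra.
Qed.

Lemma CS_gen (T : Type) (S : (T -> R) -> R)
  (Hext : forall f g, (forall x, f x = g x) -> S f = S g)
  (Hplus : forall f g, S (fun x => f x + g x) = S f + S g)
  (Hscal : forall c f, S (fun x => c * f x) = c * S f)
  (Hpos : forall f, (forall x, 0 <= f x) -> 0 <= S f)
  (a b : T -> R) :
  S (fun x => a x * b x) * S (fun x => a x * b x) <=
  S (fun x => a x * a x) * S (fun x => b x * b x).
Proof.
  apply discr. apply Hpos; intros x; cbv beta; pose proof (Rle_0_sqr (a x)); unfold Rsqr in *; lra.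
  intros t.
  assert (E : S (fun x => (a x * t - b x) * (a x * t - b x)) =
    S (fun x => a x * a x) * t * t - 2 * S (fun x => a x * b x) * t + S (fun x => b x * b x)).
  { rewrite (Hext _ (fun x => (t * t) * (a x * a x) + ((-2 * t) * (a x * b x) + b x * b x))) by (intros; ring).
    rewrite Hplus, Hplus, !Hscal. ring. }
  rewrite <- E. apply Hpos. intros x. cbv beta. pose proof (Rle_0_sqr (a x * t - b x)). unfold Rsqr in *. lra.
Qed.

Lemma CS_zs N (a b : Z -> R) :
  zs N (fun x => a x * b x) * zs N (fun x => a x * b x) <=
  zs N (fun x => a x * a x) * zs N (fun x => b x * b x).
Proof.
  apply (CS_gen Z (zs N)); intros.
  - apply zs_ext; auto.
  - apply zs_plus.
  - apply zs_scal.
  - apply zs_nonneg; auto.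
Qed.

Definition zz N (F : Z -> Z -> R) := zs N (fun j => zs N (F j)).

Lemma CS_zz N (a b : Z -> Z -> R) :
  zz N (fun x y => a x y * b x y) * zz N (fun x y => a x y * b x y) <=
  zz N (fun x y => a x y * a x y) * zz N (fun x y => b x y * b x y).
Proof.
  pose (S := fun f : Z * Z -> R => zz N (fun x y => f (x, y))).
  assert (H := CS_gen (Z * Z) S).
  specialize (H ltac:(intros f g Hfg; unfold S, zz; apply zs_ext; intros; apply zs_ext; auto)).
  specialize (H ltac:(intros f g; unfold S, zz; rewrite <- zs_plus; apply zs_ext; intros; apply zs_plus)).
  specialize (H ltac:(intros c f; unfold S, zz; rewrite <- zs_scal; apply zs_ext; intros; apply zs_scal)).
  specialize (H ltac:(intros f Hf; unfold S, zz; apply zs_nonneg; intros; apply zs_nonneg; auto)).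
  specialize (H (fun p => a (fst p) (snd p)) (fun p => b (fst p) (snd p))).
  unfold S in H. simpl in H. exact H.
Qed.

Lemma zs_scal_r N c F : zs N F * c = zs N (fun j => F j * c).
Proof. rewrite Rmult_comm, <- zs_scal. apply zs_ext; intros; ring. Qed.

Lemma zz_ext N F G : (forall j k, F j k = G j k) -> zz N F = zz N G.
Proof. intros H. unfold zz. apply zs_ext; intros; apply zs_ext; auto. Qed.

Lemma zz_plus N F G : zz N (fun j k => F j k + G j k) = zz N F + zz N G.
Proof. unfold zz. rewrite <- zs_plus. apply zs_ext; intros; apply zs_plus. Qed.

Lemma zz_scal N c F : zz N (fun j k => c * F j k) = c * zz N F.
Proof. unfold zz. rewrite <- zs_scal. apply zs_ext; intros; apply zs_scal. Qed.

Lemma zz_minus N F G : zz N (fun j k => F j k - G j k) = zz N F - zz N G.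
Proof. unfold zz. rewrite <- zs_minus. apply zs_ext; intros; apply zs_minus. Qed.

Lemma zz_prod N f g : zz N (fun j k => f j * g k) = zs N f * zs N g.
Proof. unfold zz. rewrite zs_scal_r. apply zs_ext. intros. apply zs_scal. Qed.

Lemma zz_swap N F : zz N F = zz N (fun j k => F k j).
Proof. unfold zz. apply zs_exch. Qed.

Lemma zz_le N F G : (forall j k, F j k <= G j k) -> zz N F <= zz N G.
Proof. intros H. unfold zz. apply zs_le; intros; apply zs_le; auto. Qed.

Lemma zz_nonneg N F : (forall j k, 0 <= F j k) -> 0 <= zz N F.
Proof. intros H. unfold zz. apply zs_nonneg; intros; apply zs_nonneg; auto. Qed.

Lemma zz_lim N (F : nat -> Z -> Z -> R) (G : Z -> Z -> R) :
  (forall j k, is_lim_seq (fun l => F l j k) (G j k)) ->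
  is_lim_seq (fun l => zz N (F l)) (zz N G).
Proof. intros H. unfold zz. apply zs_lim. intros j. apply zs_lim. auto. Qed.

Lemma zz_sym_k N k (G : Z -> Z -> R) : (forall j j', G j j' = G j' j) ->
  zz N (fun j j' => if Z.eq_dec (j + j') k then IZR j' * G j j' else 0) =
  IZR k / 2 * zz N (fun j j' => if Z.eq_dec (j + j') k then G j j' else 0).
Proof.
  intros HG.
  assert (H1 : zz N (fun j j' => if Z.eq_dec (j + j') k then IZR j' * G j j' else 0) =
               zz N (fun j j' => if Z.eq_dec (j + j') k then IZR j * G j j' else 0)).
  { rewrite zz_swap. apply zz_ext. intros j j'. rewrite HG, Z.add_comm. auto. }
  assert (H2 : zz N (fun j j' => if Z.eq_dec (j + j') k then IZR j' * G j j' else 0) +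
               zz N (fun j j' => if Z.eq_dec (j + j') k then IZR j * G j j' else 0) =
               IZR k * zz N (fun j j' => if Z.eq_dec (j + j') k then G j j' else 0)).
  { rewrite <- zz_plus, <- zz_scal. apply zz_ext. intros j j'. destruct Z.eq_dec; [|ring].
    subst k. rewrite plus_IZR. ring. }
  lra.
Qed.


Lemma isR_plus (f g : R -> R) a b I J : is_RInt f a b I -> is_RInt g a b J ->
  is_RInt (fun x => f x + g x) a b (I + J).
Proof. intros. exact (is_RInt_plus f g a b I J H H0). Qed.

Lemma isR_scal (f : R -> R) a b c I : is_RInt f a b I ->
  is_RInt (fun x => c * f x) a b (c * I).
Proof. intros. exact (is_RInt_scal f a b c I H). Qed.

Lemma isR_ext (f g : R -> R) a b I : (forall x, f x = g x) -> is_RInt f a b I -> is_RInt g a b I.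
Proof. intros H. apply is_RInt_ext. intros; auto. Qed.

Lemma isR_eqv (f : R -> R) a b I J : I = J -> is_RInt f a b I -> is_RInt f a b J.
Proof. intros ->; auto. Qed.

Lemma isR_zero a b : is_RInt (fun _ => 0) a b 0.
Proof. eapply isR_eqv; [| apply (is_RInt_const a b 0)]. unfold scal; simpl; unfold mult; simpl; ring. Qed.

Lemma isR_sm n (F : nat -> R -> R) (I : nat -> R) a b :
  (forall i, (i < n)%nat -> is_RInt (F i) a b (I i)) ->
  is_RInt (fun x => sm n (fun i => F i x)) a b (sm n I).
Proof.
  induction n; simpl; intros H. apply isR_zero.
  apply isR_plus. apply IHn; intros; apply H; lia. apply H; lia.
Qed.

Lemma isR_zs N (F : Z -> R -> R) (I : Z -> R) a b :
  (forall j, is_RInt (F j) a b (I j)) ->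
  is_RInt (fun x => zs N (fun j => F j x)) a b (zs N I).
Proof.
  intros H. unfold zs. apply isR_plus. apply H.
  apply (isR_sm N (fun i x => F (Z.of_nat (S i)) x + F (- Z.of_nat (S i))%Z x)).
  intros; apply isR_plus; apply H.
Qed.

Lemma isR_zz N (F : Z -> Z -> R -> R) (I : Z -> Z -> R) a b :
  (forall j k, is_RInt (F j k) a b (I j k)) ->
  is_RInt (fun x => zz N (fun j k => F j k x)) a b (zz N I).
Proof.
  intros H. unfold zz. apply (isR_zs N (fun j x => zs N (fun k => F j k x))). intros j.
  apply isR_zs. auto.
Qed.

Lemma sin_nPI n : sin (IZR n * PI) = 0.
Proof. apply sin_eq_0_1. exists n; auto. Qed.

Lemma int_cos n : is_RInt (fun x => cos (IZR n * x)) (- PI) PI (if Z.eq_dec n 0 then 2 * PI else 0).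
Proof.
  destruct Z.eq_dec as [E|E].
  - subst. apply isR_ext with (f := fun _ => 1). intros; simpl; rewrite Rmult_0_l, cos_0; auto.
    eapply isR_eqv; [|apply (is_RInt_const (-PI) PI 1)]. unfold scal; simpl; unfold mult; simpl; ring.
  - assert (Hn : IZR n <> 0) by (apply not_0_IZR; auto).
    eapply isR_eqv. 2: apply (is_RInt_derive (fun x => sin (IZR n * x) / IZR n)).
    + unfold minus, plus, opp; simpl. rewrite Ropp_mult_distr_r_reverse, sin_neg, sin_nPI. field; auto.
    + intros x _. auto_derive; auto. field; auto.
    + intros x _. apply (ex_derive_continuous (fun x => cos (IZR n * x))). auto_derive; auto.
Qed.

Lemma int_sin n : is_RInt (fun x => sin (IZR n * x)) (- PI) PI 0.
Proof.
  destruct (Z.eq_dec n 0) as [E|E].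
  - subst. apply isR_ext with (f := fun _ => 0). intros; simpl; rewrite Rmult_0_l, sin_0; auto.
    apply isR_zero.
  - assert (Hn : IZR n <> 0) by (apply not_0_IZR; auto).
    eapply isR_eqv. 2: apply (is_RInt_derive (fun x => - cos (IZR n * x) / IZR n)).
    + unfold minus, plus, opp; simpl. rewrite Ropp_mult_distr_r_reverse, cos_neg. field; auto.
    + intros x _. auto_derive; auto. field; auto.
    + intros x _. apply (ex_derive_continuous (fun x => sin (IZR n * x))). auto_derive; auto.
Qed.

Definition E (n : Z) (x : R) : C := (cos (IZR n * x), sin (IZR n * x)).

Lemma E_mul a b x : Cmult (E a x) (E b x) = E (a + b) x.
Proof.
  unfold E, Cmult; simpl. rewrite plus_IZR, Rmult_plus_distr_r, cos_plus, sin_plus.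
  f_equal; ring.
Qed.

Lemma E_neg a x : E (- a) x = Cconj (E a x).
Proof. unfold E, Cconj; simpl. rewrite opp_IZR, Ropp_mult_distr_l_reverse, cos_neg, sin_neg. auto. Qed.

Lemma int_ReE (z : C) n : is_RInt (fun x => Re (Cmult z (E n x))) (- PI) PI
  (if Z.eq_dec n 0 then 2 * PI * Re z else 0).
Proof.
  apply isR_ext with (f := fun x => Re z * cos (IZR n * x) + (- Im z) * sin (IZR n * x)).
  { intros x; unfold E, Cmult, Re, Im; simpl. idtac. ring. }
  eapply isR_eqv. 2: apply isR_plus; apply isR_scal; [apply int_cos | apply int_sin].
  match goal with |- ?G => idtac G end. destruct Z.eq_dec; simpl; ring.
Qed.

Lemma int_ImE (z : C) n : is_RInt (fun x => Im (Cmult z (E n x))) (- PI) PI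
  (if Z.eq_dec n 0 then 2 * PI * Im z else 0).
Proof.
  apply isR_ext with (f := fun x => Im z * cos (IZR n * x) + Re z * sin (IZR n * x)).
  { intros; unfold E, Cmult, Re, Im; simpl; ring. }
  eapply isR_eqv. 2: apply isR_plus; apply isR_scal; [apply int_cos | apply int_sin].
  destruct Z.eq_dec; simpl; ring.
Qed.


Definition Phi N (c : Z -> C) (x : R) : R := zs N (fun j => Re (Cmult (c j) (E j x))).
Definition PhiI N (c : Z -> C) (x : R) : R := zs N (fun j => Im (Cmult (c j) (E j x))).
Definition herm (c : Z -> C) := forall j, c (- j)%Z = Cconj (c j).
Definition supp N (c : Z -> C) := forall j, (Z.of_nat N < Z.abs j)%Z -> c j = (0, 0).

Lemma PhiI_0 N c x : herm c -> PhiI N c x = 0.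
Proof.
  intros H. unfold PhiI.
  assert (E1 : zs N (fun j => Im (Cmult (c j) (E j x))) = zs N (fun j => Im (Cmult (c (-j)%Z) (E (-j)%Z x)))).
  { rewrite <- (zs_neg N (fun j => Im (Cmult (c j) (E j x)))). auto. }
  assert (E2 : zs N (fun j => Im (Cmult (c (-j)%Z) (E (-j)%Z x))) = - zs N (fun j => Im (Cmult (c j) (E j x)))).
  { rewrite <- zs_opp. apply zs_ext. intros j _. rewrite H, E_neg. unfold Cconj, Cmult, Im; simpl. ring. }
  lra.
Qed.

Lemma Phi_cos_pt N c k x : herm c ->
  Phi N c x * cos (IZR k * x) = zs N (fun j => Re (Cmult (c j) (E (j - k) x))).
Proof.
  intros H. pose proof (PhiI_0 N c x H) as H0. unfold PhiI in H0. unfold Phi.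
  transitivity (zs N (fun j => Re (Cmult (c j) (E j x))) * cos (IZR k * x) + zs N (fun j => Im (Cmult (c j) (E j x))) * sin (IZR k * x)).
  { rewrite H0. ring. }
  rewrite !zs_scal_r, <- zs_plus. apply zs_ext. intros j _.
  unfold Z.sub. rewrite <- E_mul, E_neg. unfold E, Cconj, Cmult, Re, Im; simpl. ring.
Qed.

Lemma Phi_sin_pt N c k x : herm c ->
  Phi N c x * sin (IZR k * x) = - zs N (fun j => Im (Cmult (c j) (E (j - k) x))).
Proof.
  intros H. pose proof (PhiI_0 N c x H) as H0. unfold PhiI in H0. unfold Phi.
  transitivity (zs N (fun j => Re (Cmult (c j) (E j x))) * sin (IZR k * x) - zs N (fun j => Im (Cmult (c j) (E j x))) * cos (IZR k * x)).
  { rewrite H0. ring. }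
  rewrite <- zs_opp. rewrite !zs_scal_r, <- zs_minus. apply zs_ext. intros j _.
  unfold Z.sub. rewrite <- E_mul, E_neg. unfold E, Cconj, Cmult, Re, Im; simpl. ring.
Qed.

Definition cut N (k : Z) (r : R) := if Z_le_dec (Z.abs k) (Z.of_nat N) then r else 0.

Lemma Phi_cos N c k : herm c ->
  is_RInt (fun x => Phi N c x * cos (IZR k * x)) (- PI) PI (2 * PI * cut N k (Re (c k))).
Proof.
  intros H. eapply isR_ext. { intros x. symmetry. apply Phi_cos_pt; auto. }
  eapply isR_eqv. 2: { apply isR_zs. intros j. apply int_ReE. }
  transitivity (2 * PI * zs N (fun j => if Z.eq_dec j k then Re (c j) else 0)).
  2:{ rewrite zs_ind. unfold cut. auto. }
  rewrite <- zs_scal. apply zs_ext. intros j _.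
  destruct (Z.eq_dec (j - k) 0), (Z.eq_dec j k); try lia; subst; ring.
Qed.

Lemma Phi_sin N c k : herm c ->
  is_RInt (fun x => Phi N c x * sin (IZR k * x)) (- PI) PI (- (2 * PI * cut N k (Im (c k)))).
Proof.
  intros H. eapply isR_ext. { intros x. symmetry. apply Phi_sin_pt; auto. }
  apply isR_ext with (f := fun x => (-1) * zs N (fun j => Im (Cmult (c j) (E (j - k) x)))). { intros; ring. }
  eapply isR_eqv. 2: { apply isR_scal. apply isR_zs. intros j. apply int_ImE. }
  transitivity ((-1) * (2 * PI * zs N (fun j => if Z.eq_dec j k then Im (c j) else 0))).
  2:{ rr. rewrite zs_ind. unfold cut. ring. }
  rr. rewrite <- !zs_scal. apply zs_ext. intros j _.
  destruct (Z.eq_dec (j - k) 0), (Z.eq_dec j k); try lia; subst; ring.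
Qed.

Definition hatC (f : R -> R) (k : Z) : C := (hatRe f k, hatIm f k).

Lemma PI_pos' : 0 < 2 * PI.
Proof. pose proof PI_RGT_0; lra. Qed.

Lemma hatRe_ext f g k : (forall x, f x = g x) -> hatRe f k = hatRe g k.
Proof. intros H. unfold hatRe. f_equal. apply RInt_ext. intros; rewrite H; auto. Qed.
Lemma hatIm_ext f g k : (forall x, f x = g x) -> hatIm f k = hatIm g k.
Proof. intros H. unfold hatIm. f_equal. f_equal. apply RInt_ext. intros; rewrite H; auto. Qed.

Lemma hatRe_Phi N c k : herm c -> hatRe (Phi N c) k = cut N k (Re (c k)).
Proof.
  intros H. unfold hatRe. rewrite (is_RInt_unique _ _ _ _ (Phi_cos N c k H)).
  pose proof PI_pos'. field. lra.
Qed.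

Lemma hatIm_Phi N c k : herm c -> hatIm (Phi N c) k = cut N k (Im (c k)).
Proof.
  intros H. unfold hatIm. rewrite (is_RInt_unique _ _ _ _ (Phi_sin N c k H)).
  pose proof PI_pos'. field. lra.
Qed.

Lemma cut_supp N c k : supp N c -> cut N k (Re (c k)) = Re (c k) /\ cut N k (Im (c k)) = Im (c k).
Proof.
  intros H. unfold cut. destruct Z_le_dec. auto. rewrite H by lia. simpl; auto.
Qed.

Lemma hatC_Phi N c k : herm c -> supp N c -> hatC (Phi N c) k = c k.
Proof.
  intros H1 H2. unfold hatC. rewrite hatRe_Phi, hatIm_Phi by auto.
  destruct (cut_supp N c k H2) as [-> ->]. destruct (c k); auto.
Qed.


Lemma sm_shift n f : sm (S n) f = f 0%nat + sm n (fun i => f (S i)).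
Proof. induction n. simpl; ring. change (sm (S (S n)) f) with (sm (S n) f + f (S n)). rewrite IHn. simpl. ring. Qed.

Lemma sum_f_sm f N : sum_f_R0 f N = sm (S N) f.
Proof. induction N; simpl. ring. rewrite IHN. simpl. ring. Qed.

Lemma abs_nat_opp j : Z.abs_nat (- j) = Z.abs_nat j.
Proof. destruct j; auto. Qed.

Definition cab N (a b : nat -> R) (j : Z) : C :=
  if Z.eq_dec j 0 then (a 0%nat, 0)
  else if Z_le_dec (Z.abs j) (Z.of_nat N) then (a (Z.abs_nat j) / 2, - IZR (Z.sgn j) * b (Z.abs_nat j) / 2)
  else (0, 0).

Lemma cab_herm N a b : herm (cab N a b).
Proof.
  intros j. unfold cab, Cconj. simpl. rewrite Z.abs_opp, abs_nat_opp, Z.sgn_opp, opp_IZR.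
  destruct (Z.eq_dec (- j) 0), (Z.eq_dec j 0); try lia. subst; simpl. f_equal. ring.
  destruct Z_le_dec; simpl; f_equal; field.
Qed.

Lemma cab_supp N a b : supp N (cab N a b).
Proof. intros j Hj. unfold cab. destruct Z.eq_dec; [lia|]. destruct Z_le_dec; [lia|auto]. Qed.

Lemma INR_S_IZR i : INR (S i) = IZR (Z.of_nat (S i)).
Proof. apply INR_IZR_INZ. Qed.

Lemma inVN_Phi N a b x :
  sum_f_R0 (fun k => a k * cos (INR k * x) + b k * sin (INR k * x)) N = Phi N (cab N a b) x.
Proof.
  rewrite sum_f_sm, sm_shift. unfold Phi, zs. apply f_equal2.
  - unfold cab; simpl. unfold E, Cmult, Re; simpl. rewrite !Rmult_0_l, cos_0, sin_0. ring.
  - apply sm_ext. intros i Hi. unfold cab.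
    destruct (Z.eq_dec (Z.of_nat (S i)) 0); [lia|]. destruct (Z.eq_dec (- Z.of_nat (S i)) 0); [lia|].
    repeat (destruct Z_le_dec; [|lia]).
    rewrite ?Z.abs_opp, ?abs_nat_opp, ?Z.sgn_opp, ?Zabs2Nat.id.
    replace (Z.sgn (Z.of_nat (S i))) with 1%Z by (simpl; auto).
    rewrite E_neg. unfold E, Cconj, Cmult, Re, Im. rewrite <- !INR_S_IZR. cbn [fst snd].
    rewrite ?opp_IZR. change (IZR 1) with 1. rr. field.
Qed.

Lemma VN_rep N f : inVN N f ->
  (forall x, f x = Phi N (hatC f) x) /\ herm (hatC f) /\ supp N (hatC f).
Proof.
  intros [a [b Hf]].
  assert (Hh : forall k, hatC f k = cab N a b k).
  { intros k. rewrite <- (hatC_Phi N (cab N a b) k (cab_herm N a b) (cab_supp N a b)).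
    unfold hatC. rewrite (hatRe_ext f (Phi N (cab N a b))), (hatIm_ext f (Phi N (cab N a b))); auto;
    intros; rewrite Hf; apply inVN_Phi. }
  split; [|split].
  - intros x. rewrite Hf, inVN_Phi. unfold Phi. apply zs_ext. intros; rewrite Hh; auto.
  - intros j. rewrite !Hh. apply cab_herm.
  - intros j Hj. rewrite Hh. apply cab_supp; auto.
Qed.

Lemma Phi_VN N c : inVN N (Phi N c).
Proof.
  exists (fun k => if Nat.eq_dec k 0 then Re (c 0%Z) else Re (c (Z.of_nat k)) + Re (c (- Z.of_nat k)%Z)).
  exists (fun k => if Nat.eq_dec k 0 then 0 else - Im (c (Z.of_nat k)) + Im (c (- Z.of_nat k)%Z)).
  intros x. rewrite sum_f_sm, sm_shift. unfold Phi, zs. apply f_equal2.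
  - simpl. unfold E, Cmult, Re, Im; simpl. rewrite !Rmult_0_l, cos_0, sin_0. ring.
  - apply sm_ext. intros i Hi. simpl (Nat.eq_dec (S i) 0). rewrite E_neg.
    rewrite INR_S_IZR. unfold E, Cconj, Cmult, Re, Im; cbn [fst snd]. ring.
Qed.

Definition Dc (c : Z -> C) (j : Z) : C := (- IZR j * Im (c j), IZR j * Re (c j)).

Lemma Dc_herm c : herm c -> herm (Dc c).
Proof. intros H j. unfold Dc, Cconj. rewrite H. unfold Cconj, Re, Im; simpl. rewrite opp_IZR. f_equal; ring. Qed.

Lemma Dc_supp N c : supp N c -> supp N (Dc c).
Proof. intros H j Hj. unfold Dc. rewrite H by auto. unfold Re, Im; simpl. f_equal; ring. Qed.

Lemma der_sm n (F : nat -> R -> R) (F' : nat -> R) x :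
  (forall i, is_derive (F i) x (F' i)) ->
  is_derive (fun y => sm n (fun i => F i y)) x (sm n F').
Proof.
  intros H. induction n; simpl.
  - apply (is_derive_const 0).
  - apply (is_derive_plus (fun y => sm n (fun i => F i y)) (F n)); auto.
Qed.

Lemma der_zs N (F : Z -> R -> R) (F' : Z -> R) x :
  (forall j, is_derive (F j) x (F' j)) ->
  is_derive (fun y => zs N (fun j => F j y)) x (zs N F').
Proof.
  intros H. unfold zs. apply (is_derive_plus (F 0%Z) (fun y => sm N (fun i => F (Z.of_nat (S i)) y + F (- Z.of_nat (S i))%Z y))); auto.
  apply (der_sm N (fun i y => F (Z.of_nat (S i)) y + F (- Z.of_nat (S i))%Z y)).
  intros i. apply (is_derive_plus (F (Z.of_nat (S i))) (F (- Z.of_nat (S i))%Z)); auto.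
Qed.

Lemma Phi_der N c x : is_derive (Phi N c) x (Phi N (Dc c) x).
Proof.
  unfold Phi. apply (der_zs N (fun j y => Re (Cmult (c j) (E j y))) (fun j => Re (Cmult (Dc c j) (E j x)))).
  intros j. unfold E, Cmult, Dc, Re, Im; simpl.
  auto_derive; auto. ring.
Qed.

Lemma Derive_Phi N c x : Derive (Phi N c) x = Phi N (Dc c) x.
Proof. apply is_derive_unique, Phi_der. Qed.

Lemma dx_rep N f c x : (forall y, f y = Phi N c y) -> dx f x = Phi N (Dc c) x.
Proof. intros H. unfold dx. rewrite (Derive_ext f (Phi N c)) by auto. apply Derive_Phi. Qed.


Lemma sm_stable (a : nat -> R) n m : (forall k, (n <= k)%nat -> a k = 0) -> (n <= m)%nat -> sm m a = sm n a.
Proof.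
  intros H Hm. induction Hm. auto. simpl. rewrite IHHm, H by lia. ring.
Qed.

Lemma sum_n_sm (a : nat -> R) k : sum_n a k = sm (S k) a.
Proof.
  induction k. rewrite sum_O. simpl. ring.
  rewrite sum_Sn, IHk. simpl. unfold plus; simpl. ring.
Qed.

Lemma Series_fin (a : nat -> R) n : (forall k, (n <= k)%nat -> a k = 0) -> Series a = sm n a.
Proof.
  intros H. apply is_series_unique.
  change (is_lim_seq (sum_n a) (sm n a)).
  apply (is_lim_seq_ext_loc (fun _ => sm n a)).
  - exists n. intros k Hk. rewrite sum_n_sm. symmetry. apply sm_stable; auto.
  - apply is_lim_seq_const.
Qed.

Definition Lam (al : R) (e : Z -> C) (j : Z) : C :=
  if Z.eq_dec j 0 then (0, 0)
  else (Rpower (IZR (Z.abs j)) al * Re (e j), Rpower (IZR (Z.abs j)) al * Im (e j)).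

Lemma Lam_herm al e : herm e -> herm (Lam al e).
Proof.
  intros H j. unfold Lam, Cconj. rewrite Z.abs_opp, H.
  destruct (Z.eq_dec (-j) 0), (Z.eq_dec j 0); try lia; unfold Cconj, Re, Im; simpl; f_equal; ring.
Qed.

Lemma Lam_supp N al e : supp N e -> supp N (Lam al e).
Proof. intros H j Hj. unfold Lam. rewrite H by auto. destruct Z.eq_dec; auto. unfold Re, Im; simpl. f_equal; ring. Qed.

Lemma hat_rep N f e k : (forall y, f y = Phi N e y) -> herm e -> supp N e -> hatC f k = e k.
Proof.
  intros Hf H1 H2. rewrite <- (hatC_Phi N e k H1 H2). unfold hatC.
  rewrite (hatRe_ext f (Phi N e)), (hatIm_ext f (Phi N e)); auto.
Qed.

Lemma Dalpha_Phi N al f e x : (forall y, f y = Phi N e y) -> herm e -> supp N e ->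
  Dalpha al f x = Phi N (Lam al e) x.
Proof.
  intros Hf H1 H2. unfold Dalpha.
  assert (Hh : forall k, hatRe f k = Re (e k) /\ hatIm f k = Im (e k)).
  { intros k. pose proof (hat_rep N f e k Hf H1 H2) as Hk. unfold hatC in Hk. rewrite <- Hk. unfold Re, Im; simpl; auto. }
  rewrite (Series_fin _ N).
  2:{ intros k Hk. destruct (Hh (Z.of_nat (S k))) as [-> ->]. rewrite H2 by lia. unfold Re, Im; simpl; ring. }
  unfold Phi, zs. unfold Lam at 1. destruct (Z.eq_dec 0 0); [|lia].
  unfold Re at 1; simpl fst. replace (0 * cos (0 * x) - 0 * sin (0 * x)) with 0 by ring. rewrite Rplus_0_l.
  apply sm_ext. intros i Hi. destruct (Hh (Z.of_nat (S i))) as [-> ->].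
  unfold Lam. destruct (Z.eq_dec (Z.of_nat (S i)) 0); [lia|]. destruct (Z.eq_dec (- Z.of_nat (S i)) 0); [lia|].
  rewrite Z.abs_opp, H1, E_neg. rewrite Z.abs_eq by lia. rewrite INR_S_IZR.
  unfold E, Cconj, Cmult, Re, Im; cbn [fst snd]. ring.
Qed.

Definition W (s : R) (j : Z) : R := Rpower (1 + IZR j ^ 2) s.

Lemma W_pos s j : 0 < W s j.
Proof. unfold W, Rpower. apply exp_pos. Qed.

Lemma W_0 s : W s 0 = 1.
Proof. unfold W, Rpower. replace (1 + IZR 0 ^ 2) with 1 by (simpl; ring). rewrite ln_1, Rmult_0_r, exp_0. auto. Qed.

Definition n2 N s (c : Z -> C) := zs N (fun j => W s j * (Re (c j) ^ 2 + Im (c j) ^ 2)).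

Lemma hnorm_ext s f g : (forall x, f x = g x) -> hnorm s f = hnorm s g.
Proof.
  intros H. assert (Hs : forall k, hatsq f k = hatsq g k).
  { intros k. unfold hatsq. rewrite (hatRe_ext f g), (hatIm_ext f g); auto. }
  unfold hnorm. rewrite Hs. f_equal. f_equal. apply Series_ext. intros n. rewrite !Hs. auto.
Qed.

Lemma hnorm_Phi N s c : herm c -> supp N c -> hnorm s (Phi N c) = sqrt (n2 N s c).
Proof.
  intros H1 H2. assert (Hs : forall k, hatsq (Phi N c) k = Re (c k) ^ 2 + Im (c k) ^ 2).
  { intros k. unfold hatsq. rewrite hatRe_Phi, hatIm_Phi by auto. destruct (cut_supp N c k H2) as [-> ->]. auto. }
  unfold hnorm. f_equal. rewrite Hs. rewrite (Series_fin _ N).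
  2:{ intros k Hk. rewrite !Hs. rewrite (H2 (Z.of_nat (S k))), (H2 (- Z.of_nat (S k))%Z) by lia. unfold Re, Im; simpl; ring. }
  unfold n2, zs. rewrite W_0. f_equal. ring.
  apply sm_ext. intros i Hi. rewrite !Hs. unfold W. rewrite INR_S_IZR, opp_IZR.
  replace ((- IZR (Z.of_nat (S i))) ^ 2) with (IZR (Z.of_nat (S i)) ^ 2) by ring. ring.
Qed.


Definition Sk N (x y : Z -> C) (k : Z) : C :=
  (zz N (fun j j' => if Z.eq_dec (j + j') k then Re (Cmult (x j) (y j')) else 0),
   zz N (fun j j' => if Z.eq_dec (j + j') k then Im (Cmult (x j) (y j')) else 0)).

Lemma E3 c d j j' k x : Cmult (Cmult c d) (E (j + j' - k) x) =
  Cmult (Cmult (Cmult c (E j x)) (Cmult d (E j' x))) (E (- k) x).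
Proof.
  unfold Z.sub. rewrite <- (E_mul (j + j')), <- (E_mul j j').
  destruct c, d. unfold E, Cmult; cbn [fst snd]. f_equal; ring.
Qed.

Lemma prod_pt N c d k x : herm c -> herm d ->
  Phi N c x * Phi N d x * cos (IZR k * x) =
  zz N (fun j j' => Re (Cmult (Cmult (c j) (d j')) (E (j + j' - k) x))) /\
  Phi N c x * Phi N d x * sin (IZR k * x) =
  - zz N (fun j j' => Im (Cmult (Cmult (c j) (d j')) (E (j + j' - k) x))).
Proof.
  intros Hc Hd. unfold Phi.
  set (A := fun j => Cmult (c j) (E j x)). set (B := fun j => Cmult (d j) (E j x)).
  assert (Ic : zs N (fun j => Im (A j)) = 0) by (apply (PhiI_0 N c x Hc)).
  assert (Id : zs N (fun j => Im (B j)) = 0) by (apply (PhiI_0 N d x Hd)).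
  assert (Hre : Re (E (-k) x) = cos (IZR k * x)) by (rewrite E_neg; unfold E, Cconj, Re; simpl; auto).
  assert (Him : Im (E (-k) x) = - sin (IZR k * x)) by (rewrite E_neg; unfold E, Cconj, Im; simpl; auto).
  split.
  - rewrite (zz_ext N _ (fun j j' => Re (E (-k) x) * (Re (A j) * Re (B j')) + (- Re (E (-k) x)) * (Im (A j) * Im (B j'))
       + (- Im (E (-k) x)) * (Re (A j) * Im (B j')) + (- Im (E (-k) x)) * (Im (A j) * Re (B j')))).
    2:{ intros j j'. rewrite E3. unfold A, B. destruct (c j), (d j'), (E (-k) x), (E j x), (E j' x).
        unfold Cmult, Re, Im; cbn [fst snd]. ring. }
    rewrite !zz_plus, !zz_scal, !zz_prod. rewrite Ic, Id, Hre, Him. unfold A, B. ring.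
  - rewrite (zz_ext N _ (fun j j' => Im (E (-k) x) * (Re (A j) * Re (B j')) + (- Im (E (-k) x)) * (Im (A j) * Im (B j'))
       + (Re (E (-k) x)) * (Re (A j) * Im (B j')) + (Re (E (-k) x)) * (Im (A j) * Re (B j')))).
    2:{ intros j j'. rewrite E3. unfold A, B. destruct (c j), (d j'), (E (-k) x), (E j x), (E j' x).
        unfold Cmult, Re, Im; cbn [fst snd]. ring. }
    rewrite !zz_plus, !zz_scal, !zz_prod. rewrite Ic, Id, Hre, Him. unfold A, B. ring.
Qed.

Lemma prod_cos N c d k : herm c -> herm d ->
  is_RInt (fun x => Phi N c x * Phi N d x * cos (IZR k * x)) (- PI) PI (2 * PI * Re (Sk N c d k)).
Proof.
  intros Hc Hd. eapply isR_ext. { intros x. symmetry. apply (prod_pt N c d k x Hc Hd). }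
  eapply isR_eqv. 2:{ apply isR_zz. intros j j'. apply int_ReE. }
  unfold Sk. match goal with |- context [Re (?a, ?b)] => change (Re (a, b)) with a end. rr. rewrite <- zz_scal. apply zz_ext. intros j j'.
  destruct (Z.eq_dec (j + j' - k) 0), (Z.eq_dec (j + j') k); try lia; ring.
Qed.

Lemma prod_sin N c d k : herm c -> herm d ->
  is_RInt (fun x => Phi N c x * Phi N d x * sin (IZR k * x)) (- PI) PI (- (2 * PI * Im (Sk N c d k))).
Proof.
  intros Hc Hd. eapply isR_ext. { intros x. symmetry. apply (prod_pt N c d k x Hc Hd). }
  apply isR_ext with (f := fun x => (-1) * zz N (fun j j' => Im (Cmult (Cmult (c j) (d j')) (E (j + j' - k) x)))).
  { intros; ring. }
  eapply isR_eqv. 2:{ apply isR_scal. apply isR_zz. intros j j'. apply int_ImE. }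
  unfold Sk. match goal with |- context [Im (?a, ?b)] => change (Im (a, b)) with b end. rr.
  transitivity ((-1) * zz N (fun j j' => 2 * PI * (if Z.eq_dec (j + j') k then Im (Cmult (c j) (d j')) else 0))).
  2:{ rewrite zz_scal. ring. }
  f_equal. apply zz_ext. intros j j'.
  destruct (Z.eq_dec (j + j' - k) 0), (Z.eq_dec (j + j') k); try lia; ring.
Qed.

Definition Bh N (m : Z -> C) (k : Z) : C :=
  (- 3 * IZR k * Im (Sk N m m k), 3 * IZR k * Re (Sk N m m k)).

Lemma Sk_D N c k : Sk N c (Dc c) k = (- (IZR k / 2) * Im (Sk N c c k), IZR k / 2 * Re (Sk N c c k)).
Proof.
  unfold Sk. cbn [fst snd Re Im]. f_equal.
  - rewrite <- Ropp_mult_distr_l, <- zz_sym_k.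
    2:{ intros j j'. destruct (c j), (c j'). unfold Cmult, Im; cbn [fst snd]. ring. }
    rewrite <- (Rmult_1_l (zz N _)). replace 1 with (-(-1)) by ring. rewrite Ropp_mult_distr_l_reverse. f_equal.
    rewrite <- zz_scal. apply zz_ext. intros j j'. destruct Z.eq_dec; [|ring].
    unfold Dc, Cmult, Re, Im; cbn [fst snd]. ring.
  - rewrite <- zz_sym_k.
    2:{ intros j j'. destruct (c j), (c j'). unfold Cmult, Re; cbn [fst snd]. ring. }
    apply zz_ext. intros j j'. destruct Z.eq_dec; [|ring].
    unfold Dc, Cmult, Re, Im; cbn [fst snd]. ring.
Qed.

Lemma bop_pt N f m x : (forall y, f y = Phi N m y) -> f x * dx f x = Phi N m x * Phi N (Dc m) x.
Proof. intros H. rewrite (dx_rep N f m x H), H. auto. Qed.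

Lemma bop_cos N f m k : (forall y, f y = Phi N m y) -> herm m ->
  is_RInt (fun x => f x * dx f x * cos (IZR k * x)) (- PI) PI (2 * PI * (Re (Bh N m k) / 6)).
Proof.
  intros H Hm. apply isR_ext with (f := fun x => Phi N m x * Phi N (Dc m) x * cos (IZR k * x)).
  { intros x. rewrite (bop_pt N f m x H). auto. }
  eapply isR_eqv. 2: apply (prod_cos N m (Dc m) k Hm (Dc_herm m Hm)).
  rr. rewrite Sk_D. unfold Bh, Re; cbn [fst]. field.
Qed.

Lemma bop_sin N f m k : (forall y, f y = Phi N m y) -> herm m ->
  is_RInt (fun x => f x * dx f x * sin (IZR k * x)) (- PI) PI (- (2 * PI * (Im (Bh N m k) / 6))).
Proof.
  intros H Hm. apply isR_ext with (f := fun x => Phi N m x * Phi N (Dc m) x * sin (IZR k * x)).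
  { intros x. rewrite (bop_pt N f m x H). auto. }
  eapply isR_eqv. 2: apply (prod_sin N m (Dc m) k Hm (Dc_herm m Hm)).
  rr. rewrite Sk_D. unfold Bh, Im; cbn [snd]. field.
Qed.


Lemma inner_is f g I : is_RInt (fun x => f x * g x) (- PI) PI I -> inner f g = I.
Proof. intros H. unfold inner. apply is_RInt_unique; auto. Qed.

Lemma sm_scal_r n c f : sm n f * c = sm n (fun i => f i * c).
Proof. rewrite Rmult_comm, <- sm_scal. apply sm_ext; intros; ring. Qed.

Lemma inner_VN N g phi a b I J :
  (forall x, phi x = sum_f_R0 (fun k => a k * cos (INR k * x) + b k * sin (INR k * x)) N) ->
  (forall k, (k <= N)%nat -> is_RInt (fun x => g x * cos (IZR (Z.of_nat k) * x)) (- PI) PI (I k)) ->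
  (forall k, (k <= N)%nat -> is_RInt (fun x => g x * sin (IZR (Z.of_nat k) * x)) (- PI) PI (J k)) ->
  inner g phi = sm (S N) (fun k => a k * I k + b k * J k).
Proof.
  intros Hp HI HJ. apply inner_is.
  apply isR_ext with (f := fun x => sm (S N) (fun k => a k * (g x * cos (IZR (Z.of_nat k) * x)) + b k * (g x * sin (IZR (Z.of_nat k) * x)))).
  { intros x. rewrite Hp, sum_f_sm, Rmult_comm, sm_scal_r. apply sm_ext. intros i _. rewrite INR_IZR_INZ. ring. }
  apply (isR_sm (S N) (fun k x => a k * (g x * cos (IZR (Z.of_nat k) * x)) + b k * (g x * sin (IZR (Z.of_nat k) * x)))).
  intros i Hi. apply isR_plus; apply isR_scal; [apply HI|apply HJ]; lia.
Qed.

Lemma cos_VN N k : (Z.abs k <= Z.of_nat N)%Z -> inVN N (fun x => cos (IZR k * x)).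
Proof.
  intros Hk. exists (fun i => if Nat.eq_dec i (Z.abs_nat k) then 1 else 0). exists (fun _ => 0).
  intros x. rewrite sum_f_sm.
  rewrite (sm_ext _ _ (fun i => if Nat.eq_dec i (Z.abs_nat k) then cos (INR i * x) else 0)).
  2:{ intros i _. destruct Nat.eq_dec; ring. }
  rewrite sm_ind. destruct lt_dec; [|lia]. rewrite INR_IZR_INZ, Nat2Z.inj_abs_nat.
  destruct (Z.abs_spec k) as [[_ ->]|[_ ->]]; auto. rewrite opp_IZR, Ropp_mult_distr_l_reverse, cos_neg; auto.
Qed.

Lemma sin_VN N k : (Z.abs k <= Z.of_nat N)%Z -> inVN N (fun x => sin (IZR k * x)).
Proof.
  intros Hk. exists (fun _ => 0). exists (fun i => if Nat.eq_dec i (Z.abs_nat k) then IZR (Z.sgn k) else 0).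
  intros x. rewrite sum_f_sm.
  rewrite (sm_ext _ _ (fun i => if Nat.eq_dec i (Z.abs_nat k) then IZR (Z.sgn k) * sin (INR i * x) else 0)).
  2:{ intros i _. destruct Nat.eq_dec; ring. }
  rewrite sm_ind. destruct lt_dec; [|lia]. rewrite INR_IZR_INZ, Nat2Z.inj_abs_nat.
  destruct (Z.abs_spec k) as [[H0 ->]|[H0 ->]].
  - destruct (Z.eq_dec k 0). subst. simpl. rewrite Rmult_0_l, sin_0. ring.
    rewrite Z.sgn_pos by lia. simpl. ring.
  - rewrite Z.sgn_neg by lia. rewrite opp_IZR, Ropp_mult_distr_l_reverse, sin_neg. simpl. ring.
Qed.

Definition cadd (c d : Z -> C) (j : Z) : C := (Re (c j) + Re (d j), Im (c j) + Im (d j)).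
Definition cmid (c d : Z -> C) (j : Z) : C := ((Re (c j) + Re (d j)) / 2, (Im (c j) + Im (d j)) / 2).

Lemma Phi_add N c d x : Phi N (cadd c d) x = Phi N c x + Phi N d x.
Proof. unfold Phi. rewrite <- zs_plus. apply zs_ext; intros. unfold cadd, Cmult, Re, Im; cbn [fst snd]. ring. Qed.

Lemma Phi_mid N c d x : Phi N (cmid c d) x = (Phi N c x + Phi N d x) / 2.
Proof. unfold Phi. rewrite <- zs_plus, Rdiv_def, Rmult_comm, <- zs_scal. apply zs_ext; intros. unfold cmid, Cmult, Re, Im; cbn [fst snd]. field. Qed.

Lemma cadd_herm c d : herm c -> herm d -> herm (cadd c d).
Proof. intros H1 H2 j. unfold cadd. rewrite H1, H2. unfold Cconj, Re, Im; cbn [fst snd]. f_equal; ring. Qed.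
Lemma cmid_herm c d : herm c -> herm d -> herm (cmid c d).
Proof. intros H1 H2 j. unfold cmid. rewrite H1, H2. unfold Cconj, Re, Im; cbn [fst snd]. f_equal; field. Qed.
Lemma cadd_supp N c d : supp N c -> supp N d -> supp N (cadd c d).
Proof. intros H1 H2 j Hj. unfold cadd. rewrite H1, H2 by auto. unfold Re, Im; cbn [fst snd]. f_equal; ring. Qed.
Lemma cmid_supp N c d : supp N c -> supp N d -> supp N (cmid c d).
Proof. intros H1 H2 j Hj. unfold cmid. rewrite H1, H2 by auto. unfold Re, Im; cbn [fst snd]. f_equal; field. Qed.

Definition mu (al : R) (k : Z) : R := if Z.eq_dec k 0 then 0 else Rpower (IZR (Z.abs k)) al * IZR k.

Lemma Lam_Dc al s k : Lam al (Dc s) k = (- mu al k * Im (s k), mu al k * Re (s k)).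
Proof. unfold Lam, Dc, mu. destruct Z.eq_dec; unfold Re, Im; cbn [fst snd]; f_equal; ring. Qed.

Definition step_eq (t dt : R) (U V B : C) : Prop :=
  Re V = Re U - dt * Re B - t * (Im U + Im V) /\ Im V = Im U - dt * Im B + t * (Re U + Re V).

Lemma cos_rep N f c k : (forall y, f y = Phi N c y) -> herm c -> supp N c ->
  is_RInt (fun x => f x * cos (IZR k * x)) (- PI) PI (2 * PI * Re (c k)).
Proof.
  intros H H1 H2. apply isR_ext with (f := fun x => Phi N c x * cos (IZR k * x)). { intros x. rewrite H. auto. }
  destruct (cut_supp N c k H2) as [E1 _]. rewrite <- E1. apply Phi_cos; auto.
Qed.

Lemma sin_rep N f c k : (forall y, f y = Phi N c y) -> herm c -> supp N c ->
  is_RInt (fun x => f x * sin (IZR k * x)) (- PI) PI (- (2 * PI * Im (c k))).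
Proof.
  intros H H1 H2. apply isR_ext with (f := fun x => Phi N c x * sin (IZR k * x)). { intros x. rewrite H. auto. }
  destruct (cut_supp N c k H2) as [_ E1]. rewrite <- E1. apply Phi_sin; auto.
Qed.

Lemma Bop_int_cos N w m k : (forall y, w y = Phi N m y) -> herm m ->
  is_RInt (fun x => Bop w x * cos (IZR k * x)) (- PI) PI (6 * (2 * PI * (Re (Bh N m k) / 6))).
Proof.
  intros H Hm. apply isR_ext with (f := fun x => 6 * (w x * dx w x * cos (IZR k * x))).
  { intros x. unfold Bop. ring. }
  apply isR_scal. apply bop_cos; auto.
Qed.

Lemma Bop_int_sin N w m k : (forall y, w y = Phi N m y) -> herm m ->
  is_RInt (fun x => Bop w x * sin (IZR k * x)) (- PI) PI (6 * (- (2 * PI * (Im (Bh N m k) / 6)))).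
Proof.
  intros H Hm. apply isR_ext with (f := fun x => 6 * (w x * dx w x * sin (IZR k * x))).
  { intros x. unfold Bop. ring. }
  apply isR_scal. apply bop_sin; auto.
Qed.

Lemma Dal_rep N al g s : (forall y, g y = Phi N s y) -> herm s -> supp N s ->
  forall x, Dalpha al (dx g) x = Phi N (Lam al (Dc s)) x.
Proof.
  intros H H1 H2 x. apply Dalpha_Phi.
  - intros y. apply dx_rep; auto.
  - apply Dc_herm; auto.
  - apply Dc_supp; auto.
Qed.

Lemma PI2_pos : 0 < PI.
Proof. apply PI_RGT_0. Qed.

Lemma iter_coef N al eps dt U0 vl vl1 :
  inVN N U0 -> inVN N vl -> inVN N vl1 -> iter_step N al eps dt U0 vl vl1 ->
  forall k, (Z.abs k <= Z.of_nat N)%Z ->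
  step_eq (/ 2 * eps ^ 2 * dt * mu al k) dt (hatC U0 k) (hatC vl1 k) (Bh N (cmid (hatC U0) (hatC vl)) k).
Proof.
  intros HU Hv Hv1 Hit k Hk.
  destruct (VN_rep N U0 HU) as [RU [HhU HsU]].
  destruct (VN_rep N vl Hv) as [RV [HhV HsV]].
  destruct (VN_rep N vl1 Hv1) as [RV1 [HhV1 HsV1]].
  set (cU := hatC U0) in *. set (cV := hatC vl) in *. set (cV1 := hatC vl1) in *.
  assert (Hm : forall y, (fun x => (U0 x + vl x) / 2) y = Phi N (cmid cU cV) y).
  { intros y. rewrite Phi_mid, <- RU, <- RV. auto. }
  assert (Hg : forall y, (fun x => U0 x + vl1 x) y = Phi N (cadd cU cV1) y).
  { intros y. rewrite Phi_add, <- RU, <- RV1. auto. }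
  assert (Hs : herm (cadd cU cV1)) by (apply cadd_herm; auto).
  assert (Hs' : supp N (cadd cU cV1)) by (apply cadd_supp; auto).
  assert (HL : herm (Lam al (Dc (cadd cU cV1)))) by (apply Lam_herm, Dc_herm; auto).
  assert (HL' : supp N (Lam al (Dc (cadd cU cV1)))) by (apply Lam_supp, Dc_supp; auto).
  assert (HD := Dal_rep N al _ _ Hg Hs Hs').
  assert (HM : herm (cmid cU cV)) by (apply cmid_herm; auto).
  pose proof (Hit _ (cos_VN N k Hk)) as E1.
  pose proof (Hit _ (sin_VN N k Hk)) as E2.
  rewrite (inner_is _ _ _ (cos_rep N _ _ k RV1 HhV1 HsV1)) in E1.
  rewrite (inner_is _ _ _ (cos_rep N _ _ k RU HhU HsU)) in E1.
  rewrite (inner_is _ _ _ (Bop_int_cos N _ _ k Hm HM)) in E1.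
  rewrite (inner_is _ _ _ (cos_rep N _ _ k HD HL HL')) in E1.
  rewrite (inner_is _ _ _ (sin_rep N _ _ k RV1 HhV1 HsV1)) in E2.
  rewrite (inner_is _ _ _ (sin_rep N _ _ k RU HhU HsU)) in E2.
  rewrite (inner_is _ _ _ (Bop_int_sin N _ _ k Hm HM)) in E2.
  rewrite (inner_is _ _ _ (sin_rep N _ _ k HD HL HL')) in E2.
  rewrite Lam_Dc in E1, E2. unfold cadd in E1, E2. unfold Re at 4 in E1. unfold Im at 4 in E2. cbn [fst snd] in E1, E2.
  pose proof PI2_pos. unfold step_eq. split.
  - apply (Rmult_eq_reg_l (2 * PI)); [|lra]. rewrite E1. sp. rr. field.
  - apply (Rmult_eq_reg_l (- (2 * PI))); [|lra]. replace (- (2 * PI) * Im (cV1 k)) with (- (2 * PI * Im (cV1 k))) by ring. rewrite E2. sp. rr. field.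
Qed.

Lemma percoef a b P ReL ImL ReU ImU ReB ImB dt e2 m :
  ReL = ReU - dt * ReB - / 2 * e2 * dt * m * (ImU + ImL) ->
  ImL = ImU - dt * ImB + / 2 * e2 * dt * m * (ReU + ReL) ->
  a * (2 * P * ReL) + b * (- (2 * P * ImL)) =
  a * (2 * P * ReU) + b * (- (2 * P * ImU))
  - 6 * dt * (a * (2 * P * (ReB / 6)) + b * (- (2 * P * (ImB / 6))))
  + e2 * dt * (a * (2 * P * (- m * ((ImU + ImL) / 2))) + b * (- (2 * P * (m * ((ReU + ReL) / 2))))).
Proof.
  intros H1 H2.
  assert (Z1 : ReL - (ReU - dt * ReB - / 2 * e2 * dt * m * (ImU + ImL)) = 0) by lra.
  assert (Z2 : ImL - (ImU - dt * ImB + / 2 * e2 * dt * m * (ReU + ReL)) = 0) by lra.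
  apply Rminus_diag_uniq.
  transitivity (2 * P * a * (ReL - (ReU - dt * ReB - / 2 * e2 * dt * m * (ImU + ImL)))
               - 2 * P * b * (ImL - (ImU - dt * ImB + / 2 * e2 * dt * m * (ReU + ReL)))).
  field. rewrite Z1, Z2. ring.
Qed.

Lemma sm_comb n f g h c d : sm n f - c * sm n g + d * sm n h = sm n (fun i => f i - c * g i + d * h i).
Proof. induction n; simpl. ring. rewrite <- IHn. ring. Qed.

Lemma scheme_from_coef N al eps dt U0 L :
  inVN N U0 -> herm L -> supp N L ->
  (forall k, (Z.abs k <= Z.of_nat N)%Z ->
     step_eq (/ 2 * eps ^ 2 * dt * mu al k) dt (hatC U0 k) (L k) (Bh N (cmid (hatC U0) L) k)) ->
  scheme_step N al eps dt U0 (Phi N L).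
Proof.
  intros HU HL HL' Hst. unfold scheme_step. intros phi [a [b Hphi]].
  destruct (VN_rep N U0 HU) as [RU [HhU HsU]].
  set (cU := hatC U0) in *.
  set (Uh := fun x => (U0 x + Phi N L x) / 2).
  assert (Hm : forall y, Uh y = Phi N (cmid cU L) y).
  { intros y. unfold Uh. rewrite Phi_mid, <- RU. auto. }
  assert (HM : herm (cmid cU L)) by (apply cmid_herm; auto).
  assert (HM' : supp N (cmid cU L)) by (apply cmid_supp; auto).
  assert (HLa : herm (Lam al (Dc (cmid cU L)))) by (apply Lam_herm, Dc_herm; auto).
  assert (HLa' : supp N (Lam al (Dc (cmid cU L)))) by (apply Lam_supp, Dc_supp; auto).
  assert (HD := Dal_rep N al _ _ Hm HM HM').
  rewrite (inner_VN N (Phi N L) phi a b (fun k => 2 * PI * Re (L (Z.of_nat k))) (fun k => - (2 * PI * Im (L (Z.of_nat k)))) Hphi).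
  2:{ intros k _. apply (cos_rep N); auto. }
  2:{ intros k _. apply (sin_rep N); auto. }
  rewrite (inner_VN N U0 phi a b (fun k => 2 * PI * Re (cU (Z.of_nat k))) (fun k => - (2 * PI * Im (cU (Z.of_nat k)))) Hphi).
  2:{ intros k _. apply (cos_rep N); auto. }
  2:{ intros k _. apply (sin_rep N); auto. }
  rewrite (inner_VN N (fun x => (U0 x + Phi N L x) / 2 * dx Uh x) phi a b (fun k => 2 * PI * (Re (Bh N (cmid cU L) (Z.of_nat k)) / 6))
                    (fun k => - (2 * PI * (Im (Bh N (cmid cU L) (Z.of_nat k)) / 6))) Hphi).
  2:{ intros k _. apply (bop_cos N); auto. }
  2:{ intros k _. apply (bop_sin N); auto. }
  rewrite (inner_VN N (Dalpha al (dx Uh)) phi a b (fun k => 2 * PI * Re (Lam al (Dc (cmid cU L)) (Z.of_nat k)))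
                    (fun k => - (2 * PI * Im (Lam al (Dc (cmid cU L)) (Z.of_nat k)))) Hphi).
  2:{ intros k _. apply (cos_rep N); auto. }
  2:{ intros k _. apply (sin_rep N); auto. }
  rewrite sm_comb. apply sm_ext. intros i Hi.
  destruct (Hst (Z.of_nat i) ltac:(lia)) as [H1 H2].
  rewrite Lam_Dc. unfold cmid. sp.
  apply percoef; auto.
Qed.


Lemma P1 A B : (A * B <= 0 \/ 1 <= A * B) -> 4 * (1 + (A + B)^2) <= 5 * ((1 + A^2) * (1 + B^2)).
Proof. intros H.
  replace (4 * (1 + (A + B)^2)) with (4 + 4 * (A^2 + B^2) + 8 * (A * B)) by ring.
  replace (5 * ((1 + A^2) * (1 + B^2))) with (5 + 5 * (A^2 + B^2) + 5 * (A * B) * (A * B)) by ring.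
  assert (HS : 2 * (A * B) <= A^2 + B^2) by (pose proof (pow2_ge_0 (A - B)); nra).
  assert (HS' : 0 <= A^2 + B^2) by (pose proof (pow2_ge_0 A); pose proof (pow2_ge_0 B); nra).
  set (p := A * B) in *. set (q := A^2 + B^2) in *.
  destruct H as [H|H]. nra. nra. Qed.
Lemma P2 a x : 0 <= a -> a <= x -> (a = 0 \/ 1 <= a) -> (1 + (a + x)^2) * (1 + a^2) <= (1 + 4 * a^2) * (1 + x^2).
Proof. intros H0 H1 [H|H]. subst. pose proof (pow2_ge_0 x). nra.
  assert (0 <= (x - a) * (4 * a^2 + 3 * a * (x - a) - 2)) by (apply Rmult_le_pos; nra).
  nra. Qed.
Lemma P3 u : 2 <= u -> (1 + 4 * u^2)^2 * (u * (u - 1)) <= (1 + u^2)^4.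
Proof. intros H. set (t := u - 2). assert (0 <= t) by (unfold t; lra). replace u with (t + 2) by (unfold t; ring).
  ring_simplify.
  assert (0 <= t^2) by nra. assert (0 <= t^3) by (apply pow_le; lra). assert (0 <= t^4) by (apply pow_le; lra).
  assert (0 <= t^5) by (apply pow_le; lra). assert (0 <= t^6) by (apply pow_le; lra). assert (0 <= t^7) by (apply pow_le; lra).
  assert (0 <= t^8) by (apply pow_le; lra). lra. Qed.

Lemma div_le a b c d : 0 < b -> 0 < d -> a * d <= c * b -> a / b <= c / d.
Proof.
  intros Hb Hd H. apply Rmult_le_reg_r with (b * d). nra.
  replace (a / b * (b * d)) with (a * d) by (field; lra).
  replace (c / d * (b * d)) with (c * b) by (field; lra). auto.
Qed.

Definition fk (u : R) := (1 + 4 * u ^ 2) / (1 + u ^ 2) ^ 2.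
Definition gk (j : Z) := fk (IZR (Z.abs j)) ^ 2.
Definition rr_ (j j' : Z) := (1 + IZR (j + j') ^ 2) / ((1 + IZR j ^ 2) * (1 + IZR j' ^ 2)).

Lemma sq_abs j : IZR (Z.abs j) ^ 2 = IZR j ^ 2.
Proof. rewrite abs_IZR. rewrite <- Rsqr_pow2, <- Rsqr_pow2. symmetry. apply Rsqr_abs. Qed.

Lemma abs_IZR_cases j : IZR (Z.abs j) = 0 \/ 1 <= IZR (Z.abs j).
Proof. destruct (Z.eq_dec j 0). subst; left; auto. right. apply IZR_le. lia. Qed.

Lemma rr_le_f j j' : (Z.abs j <= Z.abs j')%Z -> rr_ j j' <= fk (IZR (Z.abs j)).
Proof.
  intros H. unfold rr_, fk.
  assert (E3 : IZR (j + j') ^ 2 <= (IZR (Z.abs j) + IZR (Z.abs j')) ^ 2).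
  { rewrite <- sq_abs, <- plus_IZR. apply pow_incr. split. apply IZR_le; lia. apply IZR_le; lia. }
  rewrite <- (sq_abs j), <- (sq_abs j').
  set (a := IZR (Z.abs j)) in *. set (x := IZR (Z.abs j')) in *.
  assert (Ha : 0 <= a) by (unfold a; apply IZR_le; lia).
  assert (Hx : a <= x) by (unfold a, x; apply IZR_le; lia).
  assert (Hc : a = 0 \/ 1 <= a) by (unfold a; apply abs_IZR_cases).
  pose proof (P2 a x Ha Hx Hc) as HP.
  pose proof (pow2_ge_0 a). pose proof (pow2_ge_0 x).
  apply div_le. nra. nra.
  apply Rle_trans with ((1 + (a + x) ^ 2) * (1 + a ^ 2) ^ 2).
  - apply Rmult_le_compat_r. nra. lra.
  - replace ((1 + 4 * a ^ 2) * ((1 + a ^ 2) * (1 + x ^ 2))) with (((1 + 4 * a ^ 2) * (1 + x ^ 2)) * (1 + a ^ 2)) by ring.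
    replace ((1 + (a + x) ^ 2) * (1 + a ^ 2) ^ 2) with (((1 + (a + x) ^ 2) * (1 + a ^ 2)) * (1 + a ^ 2)) by ring.
    apply Rmult_le_compat_r; nra.
Qed.

Lemma rr_nonneg j j' : 0 <= rr_ j j'.
Proof. unfold rr_. pose proof (pow2_ge_0 (IZR (j + j'))). pose proof (pow2_ge_0 (IZR j)). pose proof (pow2_ge_0 (IZR j')).
  apply Rmult_le_pos. lra. left. apply Rinv_0_lt_compat. nra. Qed.

Lemma rr_le_54 j j' : rr_ j j' <= 5 / 4.
Proof.
  unfold rr_. pose proof (pow2_ge_0 (IZR j)). pose proof (pow2_ge_0 (IZR j')).
  apply div_le. nra. lra. rewrite plus_IZR.
  assert (Hc : IZR j * IZR j' <= 0 \/ 1 <= IZR j * IZR j').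
  { rewrite <- mult_IZR. destruct (Z_le_gt_dec (j * j') 0). left; apply IZR_le; auto. right; apply IZR_le; lia. }
  pose proof (P1 _ _ Hc). lra.
Qed.

Lemma rr_sq j j' : rr_ j j' ^ 2 <= gk j + gk j'.
Proof.
  unfold gk. pose proof (rr_nonneg j j').
  assert (Hf : forall u, 0 <= fk u ^ 2) by (intros; apply pow2_ge_0).
  destruct (Z_le_gt_dec (Z.abs j) (Z.abs j')).
  - pose proof (rr_le_f j j' l). pose proof (Hf (IZR (Z.abs j'))).
    assert (rr_ j j' ^ 2 <= fk (IZR (Z.abs j)) ^ 2) by (apply pow_incr; lra). lra.
  - assert (E : rr_ j j' = rr_ j' j) by (unfold rr_; rewrite Z.add_comm, (Rmult_comm (1 + IZR j ^ 2)); auto).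
    pose proof (rr_le_f j' j ltac:(lia)). pose proof (Hf (IZR (Z.abs j))).
    assert (rr_ j j' ^ 2 <= fk (IZR (Z.abs j')) ^ 2) by (apply pow_incr; lra). lra.
Qed.

Lemma exp_le x y : x <= y -> exp x <= exp y.
Proof. intros [H|H]. left; apply exp_increasing; auto. subst; lra. Qed.
Lemma ln_le x y : 0 < x -> x <= y -> ln x <= ln y.
Proof. intros H [H1|H1]. left; apply ln_increasing; auto. subst; lra. Qed.

Lemma rpow_bound r s : 0 < r -> r <= 5 / 4 -> 2 <= s <= 3 -> Rpower r s <= 5 / 4 * r ^ 2.
Proof.
  intros Hr Hr' Hs. replace s with (INR 2 + (s - 2)) by (simpl; ring).
  rewrite Rpower_plus, Rpower_pow by auto. rewrite (Rmult_comm (5 / 4)). apply Rmult_le_compat_l. apply pow_le; lra.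
  unfold Rpower. replace (5 / 4) with (exp (ln (5 / 4))) by (apply exp_ln; lra).
  apply exp_le.
  assert (H1 : ln r <= ln (5 / 4)) by (apply ln_le; auto).
  assert (H2 : 0 < ln (5 / 4)) by (rewrite <- ln_1; apply ln_increasing; lra).
  destruct (Rle_dec 0 (ln r)).
  - apply Rle_trans with (ln r); auto. replace (ln r) with (1 * ln r) at 2 by ring. apply Rmult_le_compat_r; lra.
  - apply Rle_trans with 0. replace 0 with ((s - 2) * 0) by ring. apply Rmult_le_compat_l; lra. lra.
Qed.

Lemma Rpower_div x y z s : 0 < x -> 0 < y -> 0 < z -> Rpower x s / (Rpower y s * Rpower z s) = Rpower (x / (y * z)) s.
Proof.
  intros Hx Hy Hz. rewrite Rpower_mult_distr by auto.
  assert (0 < Rpower (y * z) s) by (unfold Rpower; apply exp_pos).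
  apply (Rmult_eq_reg_r (Rpower (y * z) s)); [|lra].
  rewrite Rpower_mult_distr. replace (x / (y * z) * (y * z)) with x by (field; lra). field; lra.
  apply Rdiv_lt_0_compat; nra. nra.
Qed.

Lemma ratio_bound j j' s : 2 <= s <= 3 -> W s (j + j') / (W s j * W s j') <= 5 / 4 * (gk j + gk j').
Proof.
  intros Hs. unfold W. pose proof (pow2_ge_0 (IZR j)). pose proof (pow2_ge_0 (IZR j')). pose proof (pow2_ge_0 (IZR (j + j'))).
  rewrite Rpower_div by lra. fold (rr_ j j').
  assert (0 < rr_ j j') by (unfold rr_; apply Rdiv_lt_0_compat; nra).
  apply Rle_trans with (5 / 4 * rr_ j j' ^ 2). apply rpow_bound; auto. apply rr_le_54.
  apply Rmult_le_compat_l. lra. apply rr_sq.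
Qed.

Lemma fk_sq u : 2 <= u -> fk u ^ 2 <= / (u * (u - 1)).
Proof.
  intros H. unfold fk. pose proof (P3 u H). pose proof (pow2_ge_0 u).
  replace (((1 + 4 * u ^ 2) / (1 + u ^ 2) ^ 2) ^ 2) with ((1 + 4 * u ^ 2) ^ 2 / (1 + u ^ 2) ^ 4) by (field; nra).
  rewrite <- (Rmult_1_l (/ (u * (u - 1)))). fold (1 / (u * (u - 1))).
  apply div_le. apply pow_lt; nra. nra. lra.
Qed.

Lemma sm_fk n : (1 <= n)%nat -> sm n (fun i => fk (INR (S i)) ^ 2) <= 41 / 16 - / INR n.
Proof.
  induction n; intros Hn. lia.
  destruct n.
  - simpl. unfold fk. simpl. lra.
  - change (sm (S (S n)) (fun i => fk (INR (S i)) ^ 2)) with (sm (S n) (fun i => fk (INR (S i)) ^ 2) + fk (INR (S (S n))) ^ 2).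
    pose proof (IHn ltac:(lia)).
    assert (HI : 1 <= INR (S n)) by (apply (le_INR 1); lia).
    pose proof (fk_sq (INR (S (S n))) ltac:(rewrite S_INR; lra)).
    rewrite (S_INR (S n)) in *. replace (INR (S n) + 1 - 1) with (INR (S n)) in H0 by ring.
    assert (/ INR (S n) - / (INR (S n) + 1) = / ((INR (S n) + 1) * INR (S n))) by (field; lra).
    lra.
Qed.

Lemma zs_gk N : zs N gk <= 49 / 8.
Proof.
  unfold zs. unfold gk at 1. simpl (Z.abs 0). unfold fk. simpl (IZR 0).
  replace ((1 + 4 * 0 ^ 2) / (1 + 0 ^ 2) ^ 2) with 1 by field.
  rewrite (sm_ext _ _ (fun i => 2 * fk (INR (S i)) ^ 2)).
  2:{ intros i _. unfold gk. rewrite Z.abs_opp, Z.abs_eq by lia. rewrite <- INR_S_IZR. ring. }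
  rewrite sm_scal. destruct N. simpl. lra.
  pose proof (sm_fk (S N) ltac:(lia)). assert (0 < / INR (S N)) by (apply Rinv_0_lt_compat; apply lt_0_INR; lia).
  lra.
Qed.

Lemma Cmod_pair_tri p q r t : Cmod (p + q, r + t) <= Cmod (p, r) + Cmod (q, t).
Proof. exact (Cmod_triangle (p, r) (q, t)). Qed.

Lemma Cmod00 : Cmod (0, 0) = 0.
Proof. unfold Cmod; simpl. replace (0 * (0 * 1) + 0 * (0 * 1)) with 0 by ring. apply sqrt_0. Qed.

Lemma Cmod_sm n (F : nat -> C) :
  Cmod (sm n (fun i => Re (F i)), sm n (fun i => Im (F i))) <= sm n (fun i => Cmod (F i)).
Proof.
  induction n; simpl. rewrite Cmod00. lra.
  eapply Rle_trans. apply Cmod_pair_tri. destruct (F n) as [p q]. unfold Re, Im in *; simpl in *. lra.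
Qed.

Lemma Cmod_zs N (F : Z -> C) :
  Cmod (zs N (fun j => Re (F j)), zs N (fun j => Im (F j))) <= zs N (fun j => Cmod (F j)).
Proof.
  unfold zs. eapply Rle_trans. apply Cmod_pair_tri. apply Rplus_le_compat.
  destruct (F 0%Z); apply Rle_refl.
  eapply Rle_trans.
  2:{ apply sm_le. intros i _. apply (Cmod_triangle (F (Z.of_nat (S i))) (F (- Z.of_nat (S i))%Z)). }
  apply (Cmod_sm N (fun i => Cplus (F (Z.of_nat (S i))) (F (- Z.of_nat (S i))%Z))).
Qed.

Lemma Cmod_zz N (F : Z -> Z -> C) :
  Cmod (zz N (fun j k => Re (F j k)), zz N (fun j k => Im (F j k))) <= zz N (fun j k => Cmod (F j k)).
Proof.
  unfold zz. eapply Rle_trans.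
  apply (Cmod_zs N (fun j => (zs N (fun k => Re (F j k)), zs N (fun k => Im (F j k))))).
  apply zs_le. intros j _. apply Cmod_zs.
Qed.

Definition ind (j j' k : Z) (r : R) := if Z.eq_dec (j + j') k then r else 0.

Lemma Sk_bound N x y k :
  Cmod (Sk N x y k) <= zz N (fun j j' => ind j j' k (Cmod (x j) * Cmod (y j'))).
Proof.
  eapply Rle_trans. 2: apply zz_le. 
  2:{ intros j j'. instantiate (1 := fun j j' => Cmod (if Z.eq_dec (j + j') k then Cmult (x j) (y j') else (0,0))).
      unfold ind. cbv beta. destruct Z.eq_dec. rewrite Cmod_mult. lra. rewrite Cmod00. lra. }
  eapply Rle_trans. 2: apply (Cmod_zz N (fun j j' => if Z.eq_dec (j + j') k then Cmult (x j) (y j') else (0,0))).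
  unfold Sk. right. f_equal. f_equal.
  - apply zz_ext; intros; destruct Z.eq_dec; auto.
  - apply zz_ext; intros; destruct Z.eq_dec; auto.
Qed.

Lemma CS_step N s k X Y : (forall j, 0 <= X j) -> (forall j, 0 <= Y j) ->
  zz N (fun j j' => ind j j' k (X j * Y j')) ^ 2 <=
  zz N (fun j j' => ind j j' k (/ (W s j * W s j'))) *
  zz N (fun j j' => ind j j' k (W s j * W s j' * (X j ^ 2 * Y j' ^ 2))).
Proof.
  intros HX HY.
  pose proof (CS_zz N (fun j j' => ind j j' k (/ sqrt (W s j * W s j')))
                      (fun j j' => ind j j' k (sqrt (W s j * W s j') * (X j * Y j')))) as H.
  assert (Hp : forall j j', 0 < W s j * W s j') by (intros; apply Rmult_lt_0_compat; apply W_pos).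
  rewrite (zz_ext N _ (fun j j' => ind j j' k (X j * Y j'))) in H.
  2:{ intros j j'. unfold ind. destruct Z.eq_dec; [|ring]. pose proof (sqrt_lt_R0 _ (Hp j j')). field. lra. }
  rewrite (zz_ext N (fun j j' => ind j j' k (/ sqrt (W s j * W s j')) * ind j j' k (/ sqrt (W s j * W s j')))
             (fun j j' => ind j j' k (/ (W s j * W s j')))) in H.
  2:{ intros j j'. unfold ind. destruct Z.eq_dec; [|ring]. pose proof (sqrt_lt_R0 _ (Hp j j')).
      rewrite <- Rinv_mult. rewrite sqrt_sqrt; auto. left; auto. }
  rewrite (zz_ext N (fun j j' => ind j j' k (sqrt (W s j * W s j') * (X j * Y j')) * ind j j' k (sqrt (W s j * W s j') * (X j * Y j')))
             (fun j j' => ind j j' k (W s j * W s j' * (X j ^ 2 * Y j' ^ 2)))) in H.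
  2:{ intros j j'. unfold ind. destruct Z.eq_dec; [|ring].
      replace (sqrt (W s j * W s j') * (X j * Y j') * (sqrt (W s j * W s j') * (X j * Y j'))) with
        ((sqrt (W s j * W s j') * sqrt (W s j * W s j')) * (X j ^ 2 * Y j' ^ 2)) by ring.
      rewrite sqrt_sqrt; auto. left; auto. }
  simpl. rewrite Rmult_1_r. exact H.
Qed.

Lemma ind_sum_le N k (g : Z -> R) : (forall j, 0 <= g j) ->
  zz N (fun j j' => ind j j' k (g j)) <= zs N g.
Proof.
  intros Hg. unfold zz. apply zs_le. intros j _.
  rewrite (zs_ext N _ (fun j' => if Z.eq_dec j' (k - j) then (fun _ => g j) j' else 0)).
  2:{ intros j' _. unfold ind. destruct (Z.eq_dec (j + j') k), (Z.eq_dec j' (k - j)); auto; lia. }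
  apply (zs_ind_le N (k - j) (fun _ => g j)). auto.
Qed.

Lemma gk_nonneg j : 0 <= gk j.
Proof. apply pow2_ge_0. Qed.

Lemma kernel_bound N s k : 2 <= s <= 3 ->
  W s k * zz N (fun j j' => ind j j' k (/ (W s j * W s j'))) <= 16.
Proof.
  intros Hs. rewrite <- zz_scal.
  apply Rle_trans with (zz N (fun j j' => 5 / 4 * ind j j' k (gk j) + 5 / 4 * ind j j' k (gk j'))).
  - apply zz_le. intros j j'. unfold ind. destruct Z.eq_dec; [|lra]. subst k.
    pose proof (ratio_bound j j' s Hs). unfold Rdiv in H. lra.
  - rewrite zz_plus, !zz_scal.
    pose proof (ind_sum_le N k gk gk_nonneg).
    assert (zz N (fun j j' => ind j j' k (gk j')) <= zs N gk).
    { rewrite zz_swap. rewrite (zz_ext N _ (fun j j' => ind j j' k (gk j))). apply ind_sum_le, gk_nonneg.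
      intros j j'. unfold ind. rewrite Z.add_comm. auto. }
    pose proof (zs_gk N). lra.
Qed.

Lemma Cmod2 (c : C) : Cmod c ^ 2 = Re c ^ 2 + Im c ^ 2.
Proof. apply Cmod2_alt. Qed.

Lemma bil N s x y : 2 <= s <= 3 ->
  zs N (fun k => W s k * Cmod (Sk N x y k) ^ 2) <= 16 * n2 N s x * n2 N s y.
Proof.
  intros Hs.
  set (T := fun j j' => W s j * W s j' * (Cmod (x j) ^ 2 * Cmod (y j') ^ 2)).
  apply Rle_trans with (zs N (fun k => 16 * zz N (fun j j' => ind j j' k (T j j')))).
  - apply zs_le. intros k _.
    pose proof (Sk_bound N x y k) as H1.
    pose proof (CS_step N s k (fun j => Cmod (x j)) (fun j => Cmod (y j)) (fun j => Cmod_ge_0 _) (fun j => Cmod_ge_0 _)) as H2.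
    pose proof (kernel_bound N s k Hs) as H3.
    assert (H4 : Cmod (Sk N x y k) ^ 2 <= zz N (fun j j' => ind j j' k (Cmod (x j) * Cmod (y j'))) ^ 2).
    { apply pow_incr. split; auto. apply Cmod_ge_0. }
    assert (H5 : 0 <= zz N (fun j j' => ind j j' k (T j j'))).
    { apply zz_nonneg. intros j j'. unfold ind, T. destruct Z.eq_dec; [|lra].
      pose proof (W_pos s j). pose proof (W_pos s j'). pose proof (pow2_ge_0 (Cmod (x j))). pose proof (pow2_ge_0 (Cmod (y j'))).
      apply Rmult_le_pos; apply Rmult_le_pos; lra. }
    pose proof (W_pos s k).
    apply Rle_trans with (W s k * (zz N (fun j j' => ind j j' k (/ (W s j * W s j'))) * zz N (fun j j' => ind j j' k (T j j')))).
    + apply Rmult_le_compat_l. lra. eapply Rle_trans. apply H4. apply H2.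
    + rewrite <- Rmult_assoc. apply Rmult_le_compat_r; auto.
  - rewrite zs_scal. 
    assert (E : zs N (fun k => zz N (fun j j' => ind j j' k (T j j'))) = zz N (fun j j' => zs N (fun k => ind j j' k (T j j')))).
    { unfold zz. rewrite zs_exch. apply zs_ext. intros j _. apply zs_exch. }
    rewrite E.
    assert (E2 : n2 N s x * n2 N s y = zz N T).
    { unfold n2, T. rewrite <- zz_prod. apply zz_ext. intros j j'. rewrite !Cmod2. ring. }
    rewrite Rmult_assoc, E2. apply Rmult_le_compat_l. lra.
    apply zz_le. intros j j'.
    rewrite (zs_ext N _ (fun k => if Z.eq_dec k (j + j') then (fun _ => T j j') k else 0)).
    2:{ intros k _. unfold ind. destruct (Z.eq_dec (j + j') k), (Z.eq_dec k (j + j')); auto; lia. }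
    apply (zs_ind_le N (j + j') (fun _ => T j j')).
    unfold T. pose proof (W_pos s j). pose proof (W_pos s j'). pose proof (pow2_ge_0 (Cmod (x j))). pose proof (pow2_ge_0 (Cmod (y j'))).
    apply Rmult_le_pos; apply Rmult_le_pos; lra.
Qed.


Definition nrm N s (c : Z -> C) := sqrt (zs N (fun j => W s j * Cmod (c j) ^ 2)).
Definition sq2 N s (A : Z -> R) := sqrt (zs N (fun j => W s j * A j ^ 2)).

Lemma nrm_n2 N s c : nrm N s c = sqrt (n2 N s c).
Proof. unfold nrm, n2. f_equal. apply zs_ext. intros. rewrite Cmod2. auto. Qed.

Lemma nrm_nonneg N s c : 0 <= nrm N s c.
Proof. apply sqrt_pos. Qed.

Lemma sqrt_le_ x y : x <= y -> sqrt x <= sqrt y.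
Proof. apply sqrt_le_1_alt. Qed.

Lemma mink_real N s (v a b : Z -> R) :
  (forall k, (Z.abs k <= Z.of_nat N)%Z -> 0 <= v k <= a k + b k) ->
  (forall k, 0 <= a k) -> (forall k, 0 <= b k) ->
  sq2 N s v <= sq2 N s a + sq2 N s b.
Proof.
  intros Hv Ha Hb. unfold sq2.
  set (A := zs N (fun j => W s j * a j ^ 2)). set (B := zs N (fun j => W s j * b j ^ 2)).
  assert (HA : 0 <= A) by (apply zs_nonneg; intros; pose proof (W_pos s j); pose proof (pow2_ge_0 (a j)); nra).
  assert (HB : 0 <= B) by (apply zs_nonneg; intros; pose proof (W_pos s j); pose proof (pow2_ge_0 (b j)); nra).
  assert (CS : zs N (fun j => W s j * (a j * b j)) <= sqrt A * sqrt B).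
  { pose proof (CS_zs N (fun j => sqrt (W s j) * a j) (fun j => sqrt (W s j) * b j)) as H.
    assert (Hw : forall j, sqrt (W s j) * sqrt (W s j) = W s j) by (intros; apply sqrt_sqrt; left; apply W_pos).
    rewrite (zs_ext N _ (fun j => W s j * (a j * b j))) in H by (intros j _; cbv beta; rewrite <- (Hw j) at 3; ring).
    rewrite (zs_ext N (fun j => sqrt (W s j) * a j * (sqrt (W s j) * a j)) (fun j => W s j * a j ^ 2)) in H by (intros j _; cbv beta; rewrite <- (Hw j) at 3; ring).
    rewrite (zs_ext N (fun j => sqrt (W s j) * b j * (sqrt (W s j) * b j)) (fun j => W s j * b j ^ 2)) in H by (intros j _; cbv beta; rewrite <- (Hw j) at 3; ring).
    fold A B in H. rewrite <- sqrt_mult by auto.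
    set (X := zs N (fun j => W s j * (a j * b j))) in *.
    destruct (Rle_dec X 0). apply Rle_trans with 0; auto. apply sqrt_pos.
    rewrite <- (sqrt_square X) by lra. apply sqrt_le_. lra. }
  rewrite <- (sqrt_square (sqrt A + sqrt B)) by (pose proof (sqrt_pos A); pose proof (sqrt_pos B); lra).
  apply sqrt_le_.
  apply Rle_trans with (zs N (fun j => W s j * a j ^ 2 + 2 * (W s j * (a j * b j)) + W s j * b j ^ 2)).
  - apply zs_le. intros j Hj. destruct (Hv j Hj). pose proof (W_pos s j).
    apply Rle_trans with (W s j * (a j + b j) ^ 2). apply Rmult_le_compat_l. lra. apply pow_incr; lra.
    right; ring.
  - rewrite !zs_plus, zs_scal. fold A B.
    replace ((sqrt A + sqrt B) * (sqrt A + sqrt B)) with (sqrt A * sqrt A + 2 * (sqrt A * sqrt B) + sqrt B * sqrt B) by ring.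
    rewrite !sqrt_sqrt by auto. lra.
Qed.

Lemma sq2_scal N s c A : 0 <= c -> sq2 N s (fun j => c * A j) = c * sq2 N s A.
Proof.
  intros Hc. unfold sq2. rewrite <- (sqrt_square c) at 1 by auto. rewrite <- sqrt_mult by (try nra; apply zs_nonneg; intros; pose proof (W_pos s j); pose proof (pow2_ge_0 (A j)); nra).
  f_equal. rewrite <- zs_scal. apply zs_ext; intros; ring.
Qed.

Lemma sq2_Cmod N s c : sq2 N s (fun j => Cmod (c j)) = nrm N s c.
Proof. auto. Qed.

Lemma mink N s (v : Z -> C) (a b : Z -> R) :
  (forall k, (Z.abs k <= Z.of_nat N)%Z -> Cmod (v k) <= a k + b k) ->
  (forall k, 0 <= a k) -> (forall k, 0 <= b k) ->
  nrm N s v <= sq2 N s a + sq2 N s b.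
Proof.
  intros H Ha Hb. rewrite <- sq2_Cmod. apply mink_real; auto. intros k Hk. split. apply Cmod_ge_0. auto.
Qed.

Lemma sq2_mono N s (v a : Z -> R) :
  (forall k, (Z.abs k <= Z.of_nat N)%Z -> 0 <= v k <= a k) -> (forall k, 0 <= a k) -> sq2 N s v <= sq2 N s a.
Proof.
  intros H Ha. pose proof (mink_real N s v a (fun _ => 0)) as M.
  assert (E : sq2 N s (fun _ => 0) = 0).
  { unfold sq2. rewrite (zs_ext N _ (fun _ => 0)) by (intros; ring). rewrite zs_zero. apply sqrt_0. }
  rewrite E in M. apply Rle_trans with (sq2 N s a + 0); [|lra]. apply M; auto. intros k Hk. rewrite Rplus_0_r; auto.
  intros; lra.
Qed.

Lemma step_bound t dt U V B : 0 <= dt -> step_eq t dt U V B -> Cmod V <= Cmod U + dt * Cmod B.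
Proof.
  intros Hdt [H1 H2].
  assert (E : Cmult (1, - t) V = Cplus (Cmult (1, t) U) (Cmult (RtoC (- dt)) B)).
  { destruct V, U, B. unfold Cmult, Cplus, RtoC, Re, Im in *; cbn [fst snd] in *. f_equal; lra. }
  assert (Hc : Cmod (1, - t) = Cmod (1, t)) by (unfold Cmod; cbn [fst snd]; f_equal; ring).
  assert (Hc1 : 1 <= Cmod (1, t)).
  { unfold Cmod; cbn [fst snd]. apply Rle_trans with (sqrt 1); [rewrite sqrt_1; lra|]. apply sqrt_le_. pose proof (pow2_ge_0 t). replace (1 ^ 2) with 1 by ring. lra. }
  pose proof (Cmod_triangle (Cmult (1, t) U) (Cmult (RtoC (- dt)) B)) as T.
  rewrite <- E, !Cmod_mult, Hc in T. rewrite Cmod_R, Rabs_Ropp, Rabs_right in T by lra.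
  pose proof (Cmod_ge_0 B). pose proof (Cmod_ge_0 V). pose proof (Cmod_ge_0 U).
  assert (Cmod (1, t) * Cmod V <= Cmod (1, t) * (Cmod U + dt * Cmod B)).
  { apply Rle_trans with (Cmod (1, t) * Cmod U + dt * Cmod B); auto.
    assert (0 <= dt * Cmod B) by nra. nra. }
  apply Rmult_le_reg_l with (Cmod (1, t)); lra.
Qed.

Definition cdiff (c d : Z -> C) (j : Z) : C := (Re (c j) - Re (d j), Im (c j) - Im (d j)).

Lemma step_diff t dt U V B V' B' : 0 <= dt -> step_eq t dt U V B -> step_eq t dt U V' B' ->
  Cmod (Re V - Re V', Im V - Im V') <= dt * Cmod (Re B - Re B', Im B - Im B').
Proof.
  intros Hdt [H1 H2] [H3 H4].
  set (x := Re V - Re V'). set (y := Im V - Im V').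
  set (b1 := Re B - Re B'). set (b2 := Im B - Im B').
  assert (Ex : x + t * y = - dt * b1) by (unfold x, y, b1; lra).
  assert (Ey : y - t * x = - dt * b2) by (unfold x, y, b2; lra).
  unfold Cmod; cbn [fst snd].
  rewrite <- (sqrt_square dt) by auto. rewrite <- sqrt_mult by (try nra; pose proof (pow2_ge_0 b1); pose proof (pow2_ge_0 b2); lra).
  apply sqrt_le_.
  assert ((x + t * y) ^ 2 + (y - t * x) ^ 2 = (1 + t ^ 2) * (x ^ 2 + y ^ 2)) by ring.
  assert ((- dt * b1) ^ 2 + (- dt * b2) ^ 2 = dt * dt * (b1 ^ 2 + b2 ^ 2)) by ring.
  rewrite Ex, Ey in H. pose proof (pow2_ge_0 t). pose proof (pow2_ge_0 x). pose proof (pow2_ge_0 y).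
  nra.
Qed.


Lemma Cmod_0y y : Cmod (0, y) = Rabs y.
Proof. unfold Cmod; cbn [fst snd]. replace (0 ^ 2 + y ^ 2) with (Rsqr y) by (unfold Rsqr; ring). apply sqrt_Rsqr_abs. Qed.

Lemma n2_nonneg N s c : 0 <= n2 N s c.
Proof. apply zs_nonneg. intros. pose proof (W_pos s j). pose proof (pow2_ge_0 (Re (c j))). pose proof (pow2_ge_0 (Im (c j))). nra. Qed.

Lemma sq2_S N s x y : 2 <= s <= 3 -> sq2 N s (fun k => Cmod (Sk N x y k)) <= 4 * nrm N s x * nrm N s y.
Proof.
  intros Hs. unfold sq2. rewrite !nrm_n2. pose proof (bil N s x y Hs).
  pose proof (n2_nonneg N s x). pose proof (n2_nonneg N s y).
  replace (4 * sqrt (n2 N s x) * sqrt (n2 N s y)) with (sqrt (16 * n2 N s x * n2 N s y)).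
  - apply sqrt_le_. auto.
  - rewrite !sqrt_mult by nra. replace 16 with (4 * 4) by ring. rewrite sqrt_square by lra. auto.
Qed.

Lemma abs_k_le N k : (Z.abs k <= Z.of_nat N)%Z -> Rabs (IZR k) <= INR N.
Proof. intros H. rewrite <- abs_IZR, INR_IZR_INZ. apply IZR_le. auto. Qed.

Lemma Bh_as N m k : Bh N m k = Cmult (0, 3 * IZR k) (Sk N m m k).
Proof. unfold Bh, Cmult. unfold Re, Im. cbn [fst snd]. f_equal; ring. Qed.

Lemma Bh_norm N s m : 2 <= s <= 3 -> nrm N s (Bh N m) <= 12 * INR N * nrm N s m ^ 2.
Proof.
  intros Hs. rewrite <- sq2_Cmod.
  pose proof (pos_INR N) as HN.
  apply Rle_trans with (sq2 N s (fun k => (3 * INR N) * Cmod (Sk N m m k))).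
  - apply sq2_mono. 2:{ intros; pose proof (Cmod_ge_0 (Sk N m m k)); nra. }
    intros k Hk. split. apply Cmod_ge_0. rewrite Bh_as, Cmod_mult, Cmod_0y, Rabs_mult, Rabs_right by lra.
    apply Rmult_le_compat_r. apply Cmod_ge_0. pose proof (abs_k_le N k Hk). lra.
  - rewrite sq2_scal by lra. pose proof (sq2_S N s m m Hs). simpl. rewrite Rmult_1_r.
    replace (12 * INR N * (nrm N s m * nrm N s m)) with (3 * INR N * (4 * nrm N s m * nrm N s m)) by ring.
    apply Rmult_le_compat_l; lra.
Qed.

Lemma Sk_diff N m m' k :
  cdiff (Sk N m m) (Sk N m' m') k =
  Cplus (Sk N (cdiff m m') m k) (Sk N m' (cdiff m m') k).
Proof.
  unfold cdiff, Sk, Cplus. cbn [fst snd Re Im]. unfold Re at 1 2 5 6, Im at 1 2 5 6. cbn [fst snd].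
  f_equal.
  - rewrite <- zz_minus, <- zz_plus. apply zz_ext. intros j j'. destruct Z.eq_dec; [|ring].
    unfold Cmult, Re, Im; cbn [fst snd]. ring.
  - rewrite <- zz_minus, <- zz_plus. apply zz_ext. intros j j'. destruct Z.eq_dec; [|ring].
    unfold Cmult, Re, Im; cbn [fst snd]. ring.
Qed.

Lemma Bh_diff_as N m m' k :
  cdiff (Bh N m) (Bh N m') k = Cmult (0, 3 * IZR k) (Cplus (Sk N (cdiff m m') m k) (Sk N m' (cdiff m m') k)).
Proof.
  rewrite <- Sk_diff. unfold cdiff at 1. rewrite !Bh_as. unfold cdiff, Cmult, Re, Im. cbn [fst snd]. f_equal; ring.
Qed.

Lemma dBh_norm N s m m' : 2 <= s <= 3 ->
  nrm N s (cdiff (Bh N m) (Bh N m')) <= 12 * INR N * nrm N s (cdiff m m') * (nrm N s m + nrm N s m').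
Proof.
  intros Hs. pose proof (pos_INR N) as HN.
  eapply Rle_trans.
  - apply (mink N s _ (fun k => 3 * INR N * Cmod (Sk N (cdiff m m') m k)) (fun k => 3 * INR N * Cmod (Sk N m' (cdiff m m') k))).
    + intros k Hk. rewrite Bh_diff_as, Cmod_mult, Cmod_0y, Rabs_mult, Rabs_right by lra.
      pose proof (abs_k_le N k Hk). pose proof (Cmod_triangle (Sk N (cdiff m m') m k) (Sk N m' (cdiff m m') k)).
      pose proof (Cmod_ge_0 (Sk N (cdiff m m') m k)). pose proof (Cmod_ge_0 (Sk N m' (cdiff m m') k)).
      pose proof (Cmod_ge_0 (Cplus (Sk N (cdiff m m') m k) (Sk N m' (cdiff m m') k))).
      pose proof (Rabs_pos (IZR k)). nra.
    + intros; pose proof (Cmod_ge_0 (Sk N (cdiff m m') m k)); nra.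
    + intros; pose proof (Cmod_ge_0 (Sk N m' (cdiff m m') k)); nra.
  - rewrite !sq2_scal by lra.
    pose proof (sq2_S N s (cdiff m m') m Hs). pose proof (sq2_S N s m' (cdiff m m') Hs).
    nra.
Qed.


Lemma eta_bound z : 0 < z < 1 ->
  1 + z * (1 + (8 - z) / (1 - z)) ^ 2 / (2 * ((8 - z) / (1 - z))) <= (8 - z) / (1 - z).
Proof.
  intros Hz.
  replace (1 + (8 - z) / (1 - z)) with ((9 - 2 * z) / (1 - z)) by (field; lra).
  replace (1 + z * ((9 - 2 * z) / (1 - z)) ^ 2 / (2 * ((8 - z) / (1 - z))))
    with ((2 * (1 - z) * (8 - z) + z * (9 - 2 * z) ^ 2) / (2 * (1 - z) * (8 - z))) by (field; lra).
  apply div_le. assert (0 < (1 - z) * (8 - z)) by nra. lra. lra.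
  assert (H : 0 <= 112 - 95 * z + 36 * z ^ 2 - 4 * z ^ 3).
  { assert (z ^ 3 <= z) by (simpl; nra). assert (0 <= z ^ 2) by nra. lra. }
  assert (0 < 1 - z) by lra.
  replace ((8 - z) * (2 * (1 - z) * (8 - z))) with ((1 - z) * (2 * (8 - z) ^ 2)) by ring.
  replace ((2 * (1 - z) * (8 - z) + z * (9 - 2 * z) ^ 2) * (1 - z)) with ((1 - z) * (2 * (1 - z) * (8 - z) + z * (9 - 2 * z) ^ 2)) by ring.
  apply Rmult_le_compat_l. lra. nra.
Qed.

Lemma q_lt1 z : 0 < z < 1 -> 0 <= z * (9 - 2 * z) / (8 - z) < 1.
Proof.
  intros Hz. split. apply Rmult_le_pos. nra. left; apply Rinv_0_lt_compat; lra.
  apply Rmult_lt_reg_r with (8 - z). lra. unfold Rdiv. rewrite Rmult_assoc, Rinv_l by lra. nra.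
Qed.

Lemma q_eq z : 0 < z < 1 -> z * (1 + (8 - z) / (1 - z)) / ((8 - z) / (1 - z)) = z * (9 - 2 * z) / (8 - z).
Proof. intros Hz. field. lra. Qed.

Lemma zs_single N F k : (forall j, 0 <= F j) -> (Z.abs k <= Z.of_nat N)%Z -> F k <= zs N F.
Proof.
  intros HF Hk. apply Rle_trans with (zs N (fun j => if Z.eq_dec j k then F j else 0)).
  - rewrite zs_ind. destruct Z_le_dec; [lra|lia].
  - apply zs_le. intros j _. destruct Z.eq_dec; [lra|auto].
Qed.

Lemma W_ge1 s j : 0 <= s -> 1 <= W s j.
Proof.
  intros Hs. unfold W. pose proof (pow2_ge_0 (IZR j)).
  apply Rle_trans with (Rpower (1 + IZR j ^ 2) 0). rewrite Rpower_O; lra.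
  apply Rle_Rpower; auto. lra.
Qed.

Lemma coord_le N s c k : 0 <= s -> (Z.abs k <= Z.of_nat N)%Z -> Cmod (c k) <= nrm N s c.
Proof.
  intros Hs Hk. unfold nrm. rewrite <- (sqrt_pow2 (Cmod (c k))) by apply Cmod_ge_0.
  apply sqrt_le_. apply Rle_trans with (W s k * Cmod (c k) ^ 2).
  - pose proof (W_ge1 s k Hs). pose proof (pow2_ge_0 (Cmod (c k))). nra.
  - apply (zs_single N (fun j => W s j * Cmod (c j) ^ 2)); auto.
    intros j. pose proof (W_pos s j). pose proof (pow2_ge_0 (Cmod (c j))). nra.
Qed.

Lemma nrm_mid N s c d : nrm N s (cmid c d) <= (nrm N s c + nrm N s d) / 2.
Proof.
  eapply Rle_trans. apply (mink N s _ (fun k => / 2 * Cmod (c k)) (fun k => / 2 * Cmod (d k))).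
  - intros k _. replace (cmid c d k) with (Cmult (RtoC (/ 2)) (Cplus (c k) (d k))).
    2:{ unfold cmid, Cmult, Cplus, RtoC, Re, Im. cbn [fst snd]. f_equal; field. }
    rewrite Cmod_mult, Cmod_R, Rabs_right by lra. pose proof (Cmod_triangle (c k) (d k)). lra.
  - intros; pose proof (Cmod_ge_0 (c k)); lra.
  - intros; pose proof (Cmod_ge_0 (d k)); lra.
  - rewrite !sq2_scal by lra. rewrite !sq2_Cmod. lra.
Qed.

Lemma nrm_dmid N s U a b : nrm N s (cdiff (cmid U a) (cmid U b)) <= nrm N s (cdiff a b) / 2.
Proof.
  eapply Rle_trans. apply (mink N s _ (fun k => / 2 * Cmod (cdiff a b k)) (fun _ => 0)).
  - intros k _. replace (cdiff (cmid U a) (cmid U b) k) with (Cmult (RtoC (/ 2)) (cdiff a b k)).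
    2:{ unfold cdiff, cmid, Cmult, RtoC, Re, Im. cbn [fst snd]. f_equal; field. }
    rewrite Cmod_mult, Cmod_R, Rabs_right by lra. lra.
  - intros; pose proof (Cmod_ge_0 (cdiff a b k)); lra.
  - intros; lra.
  - rewrite !sq2_scal by lra. rewrite !sq2_Cmod.
    replace (sq2 N s (fun _ => 0)) with 0. lra.
    unfold sq2. rewrite (zs_ext N _ (fun _ => 0)) by (intros; ring). rewrite zs_zero. symmetry. apply sqrt_0.
Qed.

Lemma main_coef N s dt z (cU : Z -> C) (V : nat -> Z -> C) (tk : Z -> R) :
  2 <= s <= 3 -> 0 < dt -> 0 < z < 1 ->
  (forall j, V 0%nat j = cU j) ->
  (forall l k, (Z.abs k <= Z.of_nat N)%Z -> step_eq (tk k) dt (cU k) (V (S l) k) (Bh N (cmid cU (V l)) k)) ->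
  6 * INR N * dt * ((8 - z) / (1 - z) * nrm N s cU) <= z ->
  (forall l, nrm N s (V l) <= (8 - z) / (1 - z) * nrm N s cU) /\
  (forall l, nrm N s (cdiff (V (S (S l))) (V (S l))) <= z * (9 - 2 * z) / (8 - z) * nrm N s (cdiff (V (S l)) (V l))).
Proof.
  intros Hs Hdt Hz H0 Hst Hc.
  set (eta := (8 - z) / (1 - z)) in *. set (H := nrm N s cU) in *.
  assert (Heta : 8 < eta).
  { unfold eta. assert (E : (8 - z) / (1 - z) = 8 + 7 * z / (1 - z)) by (field; lra). rewrite E.
    assert (0 < 7 * z / (1 - z)) by (apply Rdiv_lt_0_compat; lra). lra. }
  assert (HH : 0 <= H) by apply nrm_nonneg.
  pose proof (pos_INR N) as HN.
  assert (HA : INR N * dt * H <= z / (6 * eta)).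
  { apply Rmult_le_reg_r with (6 * eta). lra. replace (z / (6 * eta) * (6 * eta)) with z by (field; lra). lra. }
  assert (HA0 : 0 <= INR N * dt * H) by (apply Rmult_le_pos; nra).
  assert (Hbound : forall l, nrm N s (V l) <= eta * H).
  { induction l.
    - replace (nrm N s (V 0%nat)) with H. nra. unfold H, nrm. f_equal. apply zs_ext. intros; rewrite H0; auto.
    - assert (S1 : nrm N s (V (S l)) <= H + dt * nrm N s (Bh N (cmid cU (V l)))).
      { eapply Rle_trans. apply (mink N s _ (fun k => Cmod (cU k)) (fun k => dt * Cmod (Bh N (cmid cU (V l)) k))).
        - intros k Hk. apply step_bound with (tk k). lra. apply Hst; auto.
        - intros; apply Cmod_ge_0.
        - intros; pose proof (Cmod_ge_0 (Bh N (cmid cU (V l)) k)); nra.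
        - rewrite sq2_scal by lra. rewrite !sq2_Cmod. fold H. lra. }
      pose proof (Bh_norm N s (cmid cU (V l)) Hs) as S2.
      pose proof (nrm_mid N s cU (V l)) as S3. fold H in S3.
      pose proof (nrm_nonneg N s (cmid cU (V l))) as S4.
      assert (S5 : nrm N s (cmid cU (V l)) <= (1 + eta) * H / 2) by lra.
      assert (S6 : nrm N s (cmid cU (V l)) ^ 2 <= ((1 + eta) * H / 2) ^ 2) by (apply pow_incr; lra).
      assert (S7 : dt * nrm N s (Bh N (cmid cU (V l))) <= 3 * (INR N * dt * H) * (1 + eta) ^ 2 * H).
      { apply Rle_trans with (dt * (12 * INR N * ((1 + eta) * H / 2) ^ 2)).
        apply Rmult_le_compat_l. lra. eapply Rle_trans. apply S2. apply Rmult_le_compat_l. lra. auto.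
        right. field. }
      assert (S8 : 3 * (INR N * dt * H) * (1 + eta) ^ 2 * H <= z * (1 + eta) ^ 2 / (2 * eta) * H).
      { apply Rmult_le_compat_r. auto.
        replace (z * (1 + eta) ^ 2 / (2 * eta)) with (3 * (z / (6 * eta)) * (1 + eta) ^ 2) by (field; lra).
        apply Rmult_le_compat_r. apply pow2_ge_0. lra. }
      pose proof (eta_bound z Hz) as S9. fold eta in S9.
      assert (S10 : H + z * (1 + eta) ^ 2 / (2 * eta) * H <= eta * H).
      { replace (H + z * (1 + eta) ^ 2 / (2 * eta) * H) with ((1 + z * (1 + eta) ^ 2 / (2 * eta)) * H) by ring.
        apply Rmult_le_compat_r; auto. }
      lra. }
  split; auto.
  intros l.
  set (D := nrm N s (cdiff (V (S l)) (V l))).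
  assert (T1 : nrm N s (cdiff (V (S (S l))) (V (S l))) <=
               dt * nrm N s (cdiff (Bh N (cmid cU (V (S l)))) (Bh N (cmid cU (V l))))).
  { rewrite <- !sq2_Cmod, <- sq2_scal by lra. apply sq2_mono.
    - intros k Hk. split. apply Cmod_ge_0.
      apply (step_diff (tk k) dt (cU k)). lra. apply Hst; auto. apply Hst; auto.
    - intros; pose proof (Cmod_ge_0 (cdiff (Bh N (cmid cU (V (S l)))) (Bh N (cmid cU (V l))) k)); nra. }
  pose proof (dBh_norm N s (cmid cU (V (S l))) (cmid cU (V l)) Hs) as T2.
  pose proof (nrm_dmid N s cU (V (S l)) (V l)) as T3. fold D in T3.
  pose proof (nrm_mid N s cU (V (S l))) as T4. pose proof (nrm_mid N s cU (V l)) as T5.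
  pose proof (Hbound (S l)). pose proof (Hbound l). fold H in T4, T5.
  pose proof (nrm_nonneg N s (cdiff (cmid cU (V (S l))) (cmid cU (V l)))) as T6.
  assert (HD : 0 <= D) by apply nrm_nonneg.
  assert (T7 : nrm N s (cmid cU (V (S l))) + nrm N s (cmid cU (V l)) <= (1 + eta) * H) by lra.
  assert (T8 : 0 <= nrm N s (cmid cU (V (S l))) + nrm N s (cmid cU (V l))) by (pose proof (nrm_nonneg N s (cmid cU (V (S l)))); pose proof (nrm_nonneg N s (cmid cU (V l))); lra).
  assert (T9 : nrm N s (cdiff (Bh N (cmid cU (V (S l)))) (Bh N (cmid cU (V l)))) <= 12 * INR N * (D / 2) * ((1 + eta) * H)).
  { eapply Rle_trans. apply T2. apply Rmult_le_compat. nra. auto. apply Rmult_le_compat_l; lra. auto. }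
  rewrite <- (q_eq z Hz). fold eta.
  eapply Rle_trans. apply T1.
  apply Rle_trans with (dt * (12 * INR N * (D / 2) * ((1 + eta) * H))). apply Rmult_le_compat_l; lra.
  replace (dt * (12 * INR N * (D / 2) * ((1 + eta) * H))) with (6 * (INR N * dt * H) * (1 + eta) * D) by field.
  replace (z * (1 + eta) / eta * D) with (6 * (z / (6 * eta)) * (1 + eta) * D) by (field; lra).
  apply Rmult_le_compat_r; auto. apply Rmult_le_compat_r. lra. lra.
Qed.


Lemma geom_decay (D : nat -> R) q : 0 <= q -> (forall l, D (S l) <= q * D l) -> forall l, D l <= D 0%nat * q ^ l.
Proof.
  intros Hq H l. induction l. simpl; lra.
  simpl. specialize (H l). nra.
Qed.

Lemma sum_n_tel (x : nat -> R) n : sum_n (fun i => x (S i) - x i) n = x (S n) - x 0%nat.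
Proof. induction n. rewrite sum_O. auto. rewrite sum_Sn, IHn. unfold plus; simpl. ring. Qed.

Lemma conv_geom (x : nat -> R) C q : 0 <= q < 1 -> (forall l, Rabs (x (S l) - x l) <= C * q ^ l) ->
  exists L : R, is_lim_seq x L.
Proof.
  intros Hq H.
  assert (Hex : ex_series (fun i => x (S i) - x i)).
  { apply (ex_series_le (fun i => x (S i) - x i) (fun n => C * q ^ n)).
    - intros n. exact (H n).
    - exists (scal C (/ (1 - q))). apply (is_series_scal_l C (fun n => q ^ n)). apply is_series_geom.
      rewrite Rabs_right; lra. }
  destruct Hex as [l Hl].
  exists (l + x 0%nat).
  apply is_lim_seq_incr_1.
  apply (is_lim_seq_ext (fun n => sum_n (fun i => x (S i) - x i) n + x 0%nat)).
  { intros n. rewrite sum_n_tel. ring. }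
  apply is_lim_seq_plus'. exact Hl. apply is_lim_seq_const.
Qed.

Definition limR (u : nat -> R) : R := real (Lim_seq u).

Lemma limR_spec u (l : R) : is_lim_seq u l -> limR u = l.
Proof. intros H. unfold limR. rewrite (is_lim_seq_unique u l H). auto. Qed.

Lemma lim_uniq u (a b : R) : is_lim_seq u a -> is_lim_seq u b -> a = b.
Proof. intros H1 H2. rewrite <- (limR_spec u a H1), <- (limR_spec u b H2). auto. Qed.

Lemma Phi_sub N c d x : Phi N (cdiff c d) x = Phi N c x - Phi N d x.
Proof. unfold Phi. rewrite <- zs_minus. apply zs_ext; intros. unfold cdiff, Cmult, Re, Im; cbn [fst snd]. ring. Qed.

Lemma cdiff_herm c d : herm c -> herm d -> herm (cdiff c d).
Proof. intros H1 H2 j. unfold cdiff. rewrite H1, H2. unfold Cconj, Re, Im; cbn [fst snd]. f_equal; ring. Qed.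
Lemma cdiff_supp N c d : supp N c -> supp N d -> supp N (cdiff c d).
Proof. intros H1 H2 j Hj. unfold cdiff. rewrite H1, H2 by auto. unfold Re, Im; cbn [fst snd]. f_equal; ring. Qed.

Lemma Bh_lim N (M : nat -> Z -> C) (Mi : Z -> C) k :
  (forall j, is_lim_seq (fun l => Re (M l j)) (Re (Mi j))) ->
  (forall j, is_lim_seq (fun l => Im (M l j)) (Im (Mi j))) ->
  is_lim_seq (fun l => Re (Bh N (M l) k)) (Re (Bh N Mi k)) /\
  is_lim_seq (fun l => Im (Bh N (M l) k)) (Im (Bh N Mi k)).
Proof.
  intros HR HI.
  assert (HS1 : is_lim_seq (fun l => Re (Sk N (M l) (M l) k)) (Re (Sk N Mi Mi k))).
  { unfold Sk. sp. apply zz_lim. intros j j'. destruct Z.eq_dec. 2: apply is_lim_seq_const.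
    change (Re (Cmult (Mi j) (Mi j'))) with (Re (Mi j) * Re (Mi j') - Im (Mi j) * Im (Mi j')).
    apply (is_lim_seq_ext (fun l => Re (M l j) * Re (M l j') - Im (M l j) * Im (M l j'))).
    { intros; unfold Cmult, Re, Im; cbn [fst snd]; auto. }
    apply is_lim_seq_minus'; apply is_lim_seq_mult'; auto. }
  assert (HS2 : is_lim_seq (fun l => Im (Sk N (M l) (M l) k)) (Im (Sk N Mi Mi k))).
  { unfold Sk. sp. apply zz_lim. intros j j'. destruct Z.eq_dec. 2: apply is_lim_seq_const.
    change (Im (Cmult (Mi j) (Mi j'))) with (Re (Mi j) * Im (Mi j') + Im (Mi j) * Re (Mi j')).
    apply (is_lim_seq_ext (fun l => Re (M l j) * Im (M l j') + Im (M l j) * Re (M l j'))).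
    { intros; unfold Cmult, Re, Im; cbn [fst snd]; auto. }
    apply is_lim_seq_plus'; apply is_lim_seq_mult'; auto. }
  unfold Bh. sp. split.
  - apply (is_lim_seq_mult' (fun _ => - 3 * IZR k)). apply is_lim_seq_const. auto.
  - apply (is_lim_seq_mult' (fun _ => 3 * IZR k)). apply is_lim_seq_const. auto.
Qed.


Lemma im_le_Cmod c : Rabs (Im c) <= Cmod c.
Proof. eapply Rle_trans. 2: apply Rmax_Cmod. apply Rmax_r. Qed.

Lemma re_le_Cmod' c : Rabs (Re c) <= Cmod c.
Proof. eapply Rle_trans. 2: apply Rmax_Cmod. apply Rmax_l. Qed.

Lemma step_lim t dt U (Vs Bs : nat -> C) Vi Bi :
  (forall l, step_eq t dt U (Vs l) (Bs l)) ->
  is_lim_seq (fun l => Re (Vs l)) (Re Vi) -> is_lim_seq (fun l => Im (Vs l)) (Im Vi) ->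
  is_lim_seq (fun l => Re (Bs l)) (Re Bi) -> is_lim_seq (fun l => Im (Bs l)) (Im Bi) ->
  step_eq t dt U Vi Bi.
Proof.
  intros Hst H1 H2 H3 H4. split.
  - apply (lim_uniq (fun l => Re (Vs l))); auto.
    apply (is_lim_seq_ext (fun l => Re U - dt * Re (Bs l) - t * (Im U + Im (Vs l)))).
    { intros l. symmetry. apply (Hst l). }
    apply is_lim_seq_minus'. apply is_lim_seq_minus'. apply is_lim_seq_const.
    apply is_lim_seq_mult'. apply is_lim_seq_const. auto.
    apply is_lim_seq_mult'. apply is_lim_seq_const. apply is_lim_seq_plus'. apply is_lim_seq_const. auto.
  - apply (lim_uniq (fun l => Im (Vs l))); auto.
    apply (is_lim_seq_ext (fun l => Im U - dt * Im (Bs l) + t * (Re U + Re (Vs l)))).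
    { intros l. symmetry. apply (Hst l). }
    apply is_lim_seq_plus'. apply is_lim_seq_minus'. apply is_lim_seq_const.
    apply is_lim_seq_mult'. apply is_lim_seq_const. auto.
    apply is_lim_seq_mult'. apply is_lim_seq_const. apply is_lim_seq_plus'. apply is_lim_seq_const. auto.
Qed.

Theorem lemma3p3 (N n : nat) (alpha eps T dt zeta : R) (U0 : R -> R) (v : nat -> R -> R) :
  1 <= alpha <= 2 ->
  0 < T ->
  0 < dt ->
  INR (S n) * dt <= T ->
  0 < zeta < 1 ->
  inVN N U0 ->
  (forall l, inVN N (v l)) ->
  (forall x, v 0%nat x = U0 x) ->
  (forall l, iter_step N alpha eps dt U0 (v l) (v (S l))) ->
  6 * INR N * dt * ((8 - zeta) / (1 - zeta) * hnorm (1 + alpha) U0) <= zeta ->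
  exists U1 : R -> R,
    inVN N U1 /\
    scheme_step N alpha eps dt U0 U1 /\
    is_lim_seq (fun l => hnorm (1 + alpha) (fun x => v l x - U1 x)) 0 /\
    hnorm (1 + alpha) U1 <= (8 - zeta) / (1 - zeta) * hnorm (1 + alpha) U0.
Proof.
  intros Hal HT Hdt HnT Hz HU Hv Hv0 Hit Hc.
  assert (Hs : 2 <= 1 + alpha <= 3) by lra.
  destruct (VN_rep N U0 HU) as [RU [HhU HsU]].
  set (cU := hatC U0) in *.
  set (V := fun l => hatC (v l)).
  assert (HV : forall l, (forall x, v l x = Phi N (V l) x) /\ herm (V l) /\ supp N (V l)).
  { intros l. apply VN_rep; auto. }
  assert (Hst : forall l k, (Z.abs k <= Z.of_nat N)%Z ->
     step_eq (/ 2 * eps ^ 2 * dt * mu alpha k) dt (cU k) (V (S l) k) (Bh N (cmid cU (V l)) k)).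
  { intros l k Hk. apply (iter_coef N alpha eps dt U0 (v l) (v (S l))); auto. }
  assert (H0 : forall j, V 0%nat j = cU j).
  { intros j. unfold V, cU, hatC. rewrite (hatRe_ext (v 0%nat) U0), (hatIm_ext (v 0%nat) U0); auto. }
  assert (HhU0 : hnorm (1 + alpha) U0 = nrm N (1 + alpha) cU).
  { rewrite (hnorm_ext _ U0 (Phi N cU)) by auto. rewrite hnorm_Phi by auto. rewrite nrm_n2. auto. }
  rewrite HhU0 in Hc |- *.
  destruct (main_coef N (1 + alpha) dt zeta cU V (fun k => / 2 * eps ^ 2 * dt * mu alpha k) Hs Hdt Hz H0 Hst Hc)
    as [Hb Hq].
  set (q := zeta * (9 - 2 * zeta) / (8 - zeta)) in *.
  pose proof (q_lt1 zeta Hz) as Hq1. fold q in Hq1.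
  set (D := fun l => nrm N (1 + alpha) (cdiff (V (S l)) (V l))).
  assert (HD : forall l, D l <= D 0%nat * q ^ l).
  { apply geom_decay. lra. intros l. apply Hq. }
  assert (Hconv : forall k, (exists a : R, is_lim_seq (fun l => Re (V l k)) a) /\ (exists b : R, is_lim_seq (fun l => Im (V l k)) b)).
  { intros k. destruct (Z_le_dec (Z.abs k) (Z.of_nat N)) as [Hk|Hk].
    - split; apply (conv_geom _ (D 0%nat) q Hq1); intros l;
        (eapply Rle_trans; [| apply (HD l)]); (eapply Rle_trans; [| apply (coord_le N (1 + alpha) (cdiff (V (S l)) (V l)) k); [lra | auto]]).
      + exact (re_le_Cmod' (cdiff (V (S l)) (V l) k)).
      + exact (im_le_Cmod (cdiff (V (S l)) (V l) k)).
    - split; exists 0; apply (is_lim_seq_ext (fun _ => 0)); try apply is_lim_seq_const;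
        intros l; destruct (HV l) as [_ [_ Hsp]]; rewrite Hsp by lia; auto. }
  pose (L := fun k => (limR (fun l => Re (V l k)), limR (fun l => Im (V l k)))).
  assert (HLr : forall k, is_lim_seq (fun l => Re (V l k)) (Re (L k))).
  { intros k. destruct (proj1 (Hconv k)) as [a Ha]. unfold L. sp. rewrite (limR_spec _ a Ha). auto. }
  assert (HLi : forall k, is_lim_seq (fun l => Im (V l k)) (Im (L k))).
  { intros k. destruct (proj2 (Hconv k)) as [a Ha]. unfold L. sp. rewrite (limR_spec _ a Ha). auto. }
  assert (HLh : herm L).
  { intros j. apply injective_projections; unfold Cconj; cbn [fst snd].
    - change (Re (L (- j)%Z) = Re (L j)). apply (lim_uniq (fun l => Re (V l (- j)%Z))); auto.
      apply (is_lim_seq_ext (fun l => Re (V l j))); auto.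
      intros l. destruct (HV l) as [_ [Hh _]]. rewrite Hh. auto.
    - change (Im (L (- j)%Z) = - Im (L j)). apply (lim_uniq (fun l => Im (V l (- j)%Z))); auto.
      apply (is_lim_seq_ext (fun l => - Im (V l j))).
      { intros l. destruct (HV l) as [_ [Hh _]]. rewrite Hh. auto. }
      apply (is_lim_seq_opp (fun l => Im (V l j)) (Im (L j))). auto. }
  assert (HLs : supp N L).
  { intros j Hj. apply injective_projections; cbn [fst snd].
    - change (Re (L j) = 0). apply (lim_uniq (fun l => Re (V l j))); auto.
      apply (is_lim_seq_ext (fun _ => 0)); [|apply is_lim_seq_const].
      intros l. destruct (HV l) as [_ [_ Hsp]]. rewrite Hsp by auto. auto.
    - change (Im (L j) = 0). apply (lim_uniq (fun l => Im (V l j))); auto.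
      apply (is_lim_seq_ext (fun _ => 0)); [|apply is_lim_seq_const].
      intros l. destruct (HV l) as [_ [_ Hsp]]. rewrite Hsp by auto. auto. }
  exists (Phi N L).
  split; [apply Phi_VN|].
  split.
  { apply scheme_from_coef; auto. intros k Hk.
    assert (HM : forall j, is_lim_seq (fun l => Re (cmid cU (V l) j)) (Re (cmid cU L j)) /\
                           is_lim_seq (fun l => Im (cmid cU (V l) j)) (Im (cmid cU L j))).
    { intros j. unfold cmid. sp. split.
      - apply (is_lim_seq_ext (fun l => / 2 * (Re (cU j) + Re (V l j)))). intros; cbv beta; sp; rr; field.
        replace ((Re (cU j) + Re (L j)) / 2) with (/ 2 * (Re (cU j) + Re (L j))) by field.
        apply is_lim_seq_mult'. apply is_lim_seq_const. apply is_lim_seq_plus'. apply is_lim_seq_const. auto.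
      - apply (is_lim_seq_ext (fun l => / 2 * (Im (cU j) + Im (V l j)))). intros; cbv beta; sp; rr; field.
        replace ((Im (cU j) + Im (L j)) / 2) with (/ 2 * (Im (cU j) + Im (L j))) by field.
        apply is_lim_seq_mult'. apply is_lim_seq_const. apply is_lim_seq_plus'. apply is_lim_seq_const. auto. }
    destruct (Bh_lim N (fun l => cmid cU (V l)) (cmid cU L) k (fun j => proj1 (HM j)) (fun j => proj2 (HM j))) as [B1 B2].
    apply (step_lim _ _ _ (fun l => V (S l) k) (fun l => Bh N (cmid cU (V l)) k)).
    - intros l. apply Hst; auto.
    - apply (is_lim_seq_incr_1 (fun l => Re (V l k))). auto.
    - apply (is_lim_seq_incr_1 (fun l => Im (V l k))). auto.
    - exact B1.
    - exact B2. }
  split.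
  { apply (is_lim_seq_ext (fun l => sqrt (n2 N (1 + alpha) (cdiff (V l) L)))).
    { intros l. destruct (HV l) as [Hr [Hh Hsp]].
      rewrite (hnorm_ext _ (fun x => v l x - Phi N L x) (Phi N (cdiff (V l) L))).
      - rewrite hnorm_Phi; auto. apply cdiff_herm; auto. apply cdiff_supp; auto.
      - intros x. rewrite Phi_sub, Hr. auto. }
    rewrite <- sqrt_0. apply is_lim_seq_continuous. apply continuity_pt_sqrt. lra.
    assert (Hz0 : zs N (fun j => W (1 + alpha) j * ((Re (L j) - Re (L j)) * (Re (L j) - Re (L j)) + (Im (L j) - Im (L j)) * (Im (L j) - Im (L j)))) = 0).
    { rewrite (zs_ext N _ (fun _ => 0)) by (intros; ring). apply zs_zero. }
    rewrite <- Hz0. unfold n2. apply zs_lim. intros j.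
    apply (is_lim_seq_ext (fun l => W (1 + alpha) j * ((Re (V l j) - Re (L j)) * (Re (V l j) - Re (L j)) + (Im (V l j) - Im (L j)) * (Im (V l j) - Im (L j))))).
    { intros l. unfold cdiff. sp. ring. }
    apply is_lim_seq_mult'. apply is_lim_seq_const.
    apply is_lim_seq_plus'; apply is_lim_seq_mult'; apply is_lim_seq_minus'; auto; apply is_lim_seq_const. }
  { rewrite hnorm_Phi by auto.
    set (B := (8 - zeta) / (1 - zeta) * nrm N (1 + alpha) cU).
    assert (HB0 : 0 <= B).
    { unfold B. apply Rmult_le_pos. apply Rdiv_le_0_compat; lra. apply nrm_nonneg. }
    assert (Hn2 : forall l, n2 N (1 + alpha) (V l) <= B ^ 2).
    { intros l. pose proof (Hb l) as Hbl. rewrite nrm_n2 in Hbl. fold B in Hbl.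
      pose proof (sqrt_pos (n2 N (1 + alpha) (V l))).
      assert (Hsq : sqrt (n2 N (1 + alpha) (V l)) ^ 2 <= B ^ 2) by (apply pow_incr; lra).
      rewrite pow2_sqrt in Hsq by apply n2_nonneg. exact Hsq. }
    assert (Hlim : is_lim_seq (fun l => n2 N (1 + alpha) (V l)) (n2 N (1 + alpha) L)).
    { unfold n2. apply zs_lim. intros j.
      apply (is_lim_seq_ext (fun l => W (1 + alpha) j * (Re (V l j) * Re (V l j) + Im (V l j) * Im (V l j)))).
      { intros l. ring. }
      replace (W (1 + alpha) j * (Re (L j) ^ 2 + Im (L j) ^ 2)) with (W (1 + alpha) j * (Re (L j) * Re (L j) + Im (L j) * Im (L j))) by ring.
      apply is_lim_seq_mult'. apply is_lim_seq_const.
      apply is_lim_seq_plus'; apply is_lim_seq_mult'; auto. }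
    pose proof (is_lim_seq_le _ _ _ _ Hn2 Hlim (is_lim_seq_const (B ^ 2))) as Hle. simpl in Hle.
    rewrite <- (sqrt_pow2 B) by auto. apply sqrt_le_. auto. }
Qed.
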